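(* The self-adjoint map $\psi_h^{[DB]^2} \equiv e^{\frac{h}{2}\hat{T}}\,\psi_{h/2}^{\dagger W}\,\psi_{h/2}^{W}\,e^{\frac{h}{2}\hat{T}}$ (the integrator of Hernandez \& Bertschinger) has error Hamiltonian $H_{\mathrm{err}}^{[DB]^2} = \frac{h^2}{48}\{\{T,V\},V\}_3 + \mathcal{O}(h^4)$, and the map $\psi_h^{[BD]^2} \equiv \psi_{h/2}^{W}\,e^{h\hat{T}}\,\psi_{h/2}^{\dagger W}$ has $H_{\mathrm{err}}^{[BD]^2} = H_{\mathrm{err}}^{[DB]^2} + \mathcal{O}(h^4)$. In particular, all $\mathcal{O}(h^2)$ error terms arising from close two-body encounters, i.e. $\{\{V,T\},T\}$ and $\{\{T,V\},V\}_2$, are absent; the order in which the binary kicks are applied does not affect the error Hamiltonian at order $h^2$.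
   Context: Consider the gravitational $N$-body Hamiltonian $H=T+V$ with $T=\sum_i \vec{p}_i^2/(2m_i)$, $V=\sum_{i<j}V_{ij}$, $V_{ij}=-Gm_im_j/|\vec{x}_i-\vec{x}_j|$. For a phase-space function $A$, $\hat{A}$ denotes its Lie operator $\hat{A}w=\{w,A\}$ ($\{,\}$ the Poisson bracket), so $e^{h\hat{A}}$ is the exact time-$h$ flow of $A$. A composite symplectic map evolves the system exactly under a surrogate Hamiltonian $\tilde{H}=H+H_{\mathrm{err}}(h)$ (obtained via the Campbell–Baker–Hausdorff formula). The binary Hamiltonian of pair $(i,j)$ is $H_{ij}=T_i+T_j+V_{ij}$ with $T_i=\vec{p}_i^2/(2m_i)$; a binary kick is the map $e^{h\hat{H}_{ij}}e^{-h(\hat{T}_i+\hat{T}_j)}$ (exact Kepler two-body flow followed by a backward drift of the two particles). $\psi_h^{W}=\prod_{(i,j)} e^{h\hat{H}_{ij}}e^{-h(\hat{T}_i+\hat{T}_j)}$ is the product of binary kicks over all $N(N-1)/2$ particle pairs in some fixed order, and $\psi_h^{\dagger W}$ is its adjoint (same kicks in reversed order). The nested-bracket terms are split as $\{\{T,V\},V\}=\{\{T,V\},V\}_2+\{\{T,V\},V\}_3$, where $\{\{T,V\},V\}_2\equiv\sum_{i<j}\{\{T,V_{ij}\},V_{ij}\}$ (two-body-encounter terms, each equal to $G^2m_im_j(m_i+m_j)/r_{ij}^4$) and $\{\{T,V\},V\}_3\equiv 2\sum_{i<j<k}\big(\{\{T,V_{ij}\},V_{ik}\}+\{\{T,V_{jk}\},V_{ji}\}+\{\{T,V_{ki}\},V_{kj}\}\big)$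 (three-body-encounter terms, with $\{\{T,V_{ij}\},V_{ik}\}=G^2m_im_jm_k\,\vec{x}_{ij}\cdot\vec{x}_{ik}/(r_{ij}^3r_{ik}^3)$, $\vec{x}_{ij}=\vec{x}_i-\vec{x}_j$, $r_{ij}=|\vec{x}_{ij}|$). *)

(* Defs.v *)
From Stdlib Require Import Reals List Arith Permutation.
From Coquelicot Require Import Coquelicot.
Import ListNotations.
Open Scope R_scope.

(* Phase-space coordinates: x i a, p i a for particle i, Cartesian component a < 3. *)
Definition Coord := nat -> nat -> R.
Definition Fun := Coord -> Coord -> R.

Definition sumR (n : nat) (f : nat -> R) : R :=
  fold_right Rplus 0 (map f (seq 0 n)).

Definition upd (x : Coord) (i a : nat) (t : R) : Coord :=
  fun j b => if andb (Nat.eqb j i) (Nat.eqb b a) then t else x j b.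

Definition dX (f : Fun) (i a : nat) : Fun :=
  fun x p => Derive (fun t => f (upd x i a t) p) (x i a).
Definition dP (f : Fun) (i a : nat) : Fun :=
  fun x p => Derive (fun t => f x (upd p i a t)) (p i a).

Definition poisson (N : nat) (f g : Fun) : Fun :=
  fun x p => sumR N (fun i => sumR 3 (fun a =>
     dX f i a x p * dP g i a x p - dP f i a x p * dX g i a x p)).

Definition addF (f g : Fun) : Fun := fun x p => f x p + g x p.
Definition scaleF (c : R) (f : Fun) : Fun := fun x p => c * f x p.
Definition zeroF : Fun := fun _ _ => 0.

Definition Ti (m : nat -> R) (i : nat) : Fun :=
  fun x p => sumR 3 (fun a => p i a ^ 2) / (2 * m i).
Definition Vij (G : R) (m : nat -> R) (i j : nat) : Fun :=
  fun x p => - G * m i * m j / sqrt (sumR 3 (fun a => (x i a - x j a) ^ 2)).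
Definition Tkin (N : nat) (m : nat -> R) : Fun :=
  fun x p => sumR N (fun i => Ti m i x p).
Definition Vpot (N : nat) (G : R) (m : nat -> R) : Fun :=
  fun x p => sumR N (fun i => sumR N (fun j =>
     if Nat.ltb i j then Vij G m i j x p else 0)).
Definition Hij (G : R) (m : nat -> R) (i j : nat) : Fun :=
  addF (addF (Ti m i) (Ti m j)) (Vij G m i j).

Definition TVV3 (N : nat) (G : R) (m : nat -> R) : Fun :=
  let T := Tkin N m in
  let br := poisson N in
  fun x p => 2 * sumR N (fun i => sumR N (fun j => sumR N (fun k =>
    if andb (Nat.ltb i j) (Nat.ltb j k) then
        br (br T (Vij G m i j)) (Vij G m i k) x p
      + br (br T (Vij G m j k)) (Vij G m j i) x p
      + br (br T (Vij G m k i)) (Vij G m k j) x p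
    else 0))).

(* Lie series in h, truncated after order h^4: a series S represents
   sum_{k=1..4} h^k S k  (a Lie-operator exponent e^{hat S}); coefficients
   for k = 0 or k > 4 are ignored/zero.  Everything of order h^5 and higher
   is dropped, so this is the Lie algebra (generated in h-degree >= 1)
   modulo h^5, which is nilpotent: the BCH formula below, truncated at
   word length 4, is exact there. *)
Definition Ser := nat -> Fun.

Definition zeroS : Ser := fun _ => zeroF.
Definition addS (A B : Ser) : Ser := fun k => addF (A k) (B k).
Definition scaleS (c : R) (A : Ser) : Ser := fun k => scaleF c (A k).

(* Commutator of Lie operators: [hat F, hat G] = hat {G, F}. *)
Definition opbr (N : nat) (F G : Fun) : Fun := poisson N G F.

Definition brS (N : nat) (A B : Ser) : Ser :=
  fun k => if Nat.leb k 4 then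
    fun x p => sumR k (fun a => opbr N (A a) (B (k - a)%nat) x p
                                 * (if Nat.ltb 0 a then 1 else 0))
  else zeroF.
(* note: terms with a = 0 or k - a = 0 use A 0 / B 0, which are multiplied by 0
   (a = 0) or are coefficients of h^0; generators have zero h^0 part. *)

Definition bch (N : nat) (X Y : Ser) : Ser :=
  let b := brS N in
  addS (addS X Y)
   (addS (scaleS (1/2) (b X Y))
    (addS (scaleS (1/12) (b X (b X Y)))
     (addS (scaleS (-1/12) (b Y (b X Y)))
           (scaleS (-1/24) (b Y (b X (b X Y))))))).

(* Lie series of the exact time-(c h) flow of F : e^{c h hat F}. *)
Definition gen (c : R) (F : Fun) : Ser :=
  fun k => if Nat.eqb k 1 then scaleF c F else zeroF.

(* Exponent (log) of the product e^{A_1} e^{A_2} ... e^{A_n} of Lie operators. *)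
Definition logProd (N : nat) (l : list Ser) : Ser :=
  fold_left (bch N) l zeroS.

Definition kick (G : R) (m : nat -> R) (c : R) (ij : nat * nat) : list Ser :=
  [gen c (Hij G m (fst ij) (snd ij)); gen (- c) (addF (Ti m (fst ij)) (Ti m (snd ij)))].

Definition psiW (G : R) (m : nat -> R) (c : R) (ord : list (nat * nat)) : list Ser :=
  flat_map (kick G m c) ord.
(* its adjoint psi^{dagger W}_{c h} = (psi^W_{-c h})^{-1}: the same factors in
   reversed order (kicks reversed, each kick's two factors reversed). *)
Definition psiWdag (G : R) (m : nat -> R) (c : R) (ord : list (nat * nat)) : list Ser :=
  rev (psiW G m c ord).

Definition allPairs (N : nat) : list (nat * nat) :=
  flat_map (fun j => map (fun i => (i, j)) (seq 0 j)) (seq 0 N).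

Definition DB2 (N : nat) (G : R) (m : nat -> R) (ord : list (nat * nat)) : list Ser :=
  [gen (1/2) (Tkin N m)] ++ psiWdag G m (1/2) ord ++ psiW G m (1/2) ord
  ++ [gen (1/2) (Tkin N m)].

Definition BD2 (N : nat) (G : R) (m : nat -> R) (ord : list (nat * nat)) : list Ser :=
  psiW G m (1/2) ord ++ [gen 1 (Tkin N m)] ++ psiWdag G m (1/2) ord.

(* h * (H + h^2/48 {{T,V},V}_3): the claimed exponent h*H~ up to O(h^5) *)
Definition target (N : nat) (G : R) (m : nat -> R) : Ser :=
  fun k => if Nat.eqb k 1 then addF (Tkin N m) (Vpot N G m)
           else if Nat.eqb k 3 then scaleF (1/48) (TVV3 N G m)
           else zeroF.

Definition noCollision (N : nat) (x : Coord) : Prop :=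
  forall i j, (i < N)%nat -> (j < N)%nat -> i <> j ->
    exists a, (a < 3)%nat /\ x i a <> x j a.

(* Main.v *)
Require Import Defs.
From Stdlib Require Import Reals List Arith Permutation Lra Lia FunctionalExtensionality.
From Coquelicot Require Import Coquelicot.
Import ListNotations.
Open Scope R_scope.

Lemma isd_ext (f : R -> R) (x l lp : R) : is_derive f x l -> l = lp -> is_derive f x lp.
Proof. intros H ->; exact H. Qed.
Lemma isd_plus (f g : R -> R) (x a b : R) : is_derive f x a -> is_derive g x b ->
  is_derive (fun t => f t + g t) x (a + b).
Proof. intros; apply (is_derive_plus f g x a b); auto. Qed.
Lemma isd_mult (f g : R -> R) (x a b : R) : is_derive f x a -> is_derive g x b ->
  is_derive (fun t => f t * g t) x (a * g x + f x * b).
Proof. intros Ha Hb. apply (is_derive_mult f g x a b Ha Hb). intros; apply Rmult_comm. Qed.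
Lemma isd_const (c x : R) : is_derive (fun _ => c) x 0.
Proof. apply (is_derive_const c x). Qed.
Lemma isd_id (x : R) : is_derive (fun t => t) x 1.
Proof. apply (is_derive_id x). Qed.

Lemma sumR_S n f : sumR (S n) f = sumR n f + f n.
Proof.
  unfold sumR. rewrite seq_S, map_app, fold_right_app. simpl.
  generalize (f n). induction (map f (seq 0 n)); intros; simpl; [ring|].
  rewrite IHl. ring.
Qed.
Lemma sumR_0 f : sumR 0 f = 0.
Proof. reflexivity. Qed.
Lemma sumR_ext n f g : (forall i, (i < n)%nat -> f i = g i) -> sumR n f = sumR n g.
Proof. induction n; intros H; [reflexivity|]. rewrite !sumR_S, IHn, H; auto. Qed.
Lemma sumR_plus n f g : sumR n (fun i => f i + g i) = sumR n f + sumR n g.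
Proof. induction n; [unfold sumR; simpl; ring|]. rewrite !sumR_S, IHn. ring. Qed.
Lemma sumR_scal n c f : sumR n (fun i => c * f i) = c * sumR n f.
Proof. induction n; [unfold sumR; simpl; ring|]. rewrite !sumR_S, IHn. ring. Qed.
Lemma sumR_zero n f : (forall i, (i < n)%nat -> f i = 0) -> sumR n f = 0.
Proof. intros H. rewrite (sumR_ext n f (fun _ => 0)) by auto. clear H. induction n; [reflexivity|].
  rewrite sumR_S, IHn. ring. Qed.
Lemma sumR_swap n m F : sumR n (fun i => sumR m (fun j => F i j)) = sumR m (fun j => sumR n (fun i => F i j)).
Proof. induction n; [simpl; symmetry; apply sumR_zero; auto|].
  rewrite sumR_S, IHn. rewrite <- sumR_plus. apply sumR_ext. intros; rewrite sumR_S; reflexivity. Qed.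
Lemma isd_sumR n (F : nat -> R -> R) x (d : nat -> R) :
  (forall i, (i < n)%nat -> is_derive (F i) x (d i)) ->
  is_derive (fun t => sumR n (fun i => F i t)) x (sumR n d).
Proof. induction n; intros H.
  - apply (isd_ext _ _ _ _ (isd_const 0 x)). reflexivity.
  - eapply isd_ext. { apply (is_derive_ext (fun t => sumR n (fun i => F i t) + F n t)).
    { intro t. rewrite sumR_S. reflexivity. }
    apply isd_plus; [apply IHn; intros; apply H; lia| apply H; lia]. }
    rewrite sumR_S; reflexivity.
Qed.

Lemma upd_same (x : Coord) k b : upd x k b (x k b) = x.
Proof. apply functional_extensionality; intro j; apply functional_extensionality; intro c.
  unfold upd. destruct (Nat.eqb_spec j k), (Nat.eqb_spec c b); subst; simpl; auto. Qed.

Inductive E : Type :=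
| Cst (r : R) | Xc (i a : nat) | Pc (i a : nat) | Qc (i j : nat)
| EAdd (e1 e2 : E) | EMul (e1 e2 : E).

Definition r2 (x : Coord) i j := sumR 3 (fun a => (x i a - x j a) ^ 2).

Fixpoint ev (e : E) : Fun := fun x p =>
  match e with
  | Cst r => r | Xc i a => x i a | Pc i a => p i a
  | Qc i j => / sqrt (r2 x i j)
  | EAdd e1 e2 => ev e1 x p + ev e2 x p
  | EMul e1 e2 => ev e1 x p * ev e2 x p
  end.

Inductive dir := DX (k b : nat) | DP (k b : nat).
Definition dl (k i : nat) : R := if Nat.eqb k i then 1 else 0.
Definition d2 (k i b a : nat) : R := if andb (Nat.eqb k i) (Nat.eqb b a) then 1 else 0.

Fixpoint dE (d : dir) (e : E) : E :=
  match e with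
  | Cst _ => Cst 0
  | Xc i a => match d with DX k b => Cst (d2 k i b a) | DP _ _ => Cst 0 end
  | Pc i a => match d with DP k b => Cst (d2 k i b a) | DX _ _ => Cst 0 end
  | Qc i j => match d with
      | DX k b => if Nat.ltb b 3 then
          EMul (Cst (dl k i - dl k j)) (EMul (EAdd (Xc j b) (EMul (Cst (-1)) (Xc i b)))
             (EMul (Qc i j) (EMul (Qc i j) (Qc i j))))
          else Cst 0
      | DP _ _ => Cst 0 end
  | EAdd e1 e2 => EAdd (dE d e1) (dE d e2)
  | EMul e1 e2 => EAdd (EMul (dE d e1) e2) (EMul e1 (dE d e2))
  end.

Fixpoint wfE (N : nat) (e : E) : Prop :=
  match e with
  | Qc i j => (i < N)%nat /\ (j < N)%nat /\ i <> j
  | EAdd a b | EMul a b => wfE N a /\ wfE N b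
  | _ => True
  end.

Definition lineF (f : Fun) (d : dir) (x p : Coord) (t : R) : R :=
  match d with DX k b => f (upd x k b t) p | DP k b => f x (upd p k b t) end.
Definition basev (d : dir) (x p : Coord) : R :=
  match d with DX k b => x k b | DP k b => p k b end.

Lemma lineF_base f d x p : lineF f d x p (basev d x p) = f x p.
Proof. destruct d; simpl; rewrite upd_same; reflexivity. Qed.

Lemma sq_pos u : u <> 0 -> 0 < u ^ 2.
Proof. intros H. simpl. rewrite Rmult_1_r. apply Rsqr_pos_lt. auto. Qed.

Lemma r2_pos N x i j : noCollision N x -> (i < N)%nat -> (j < N)%nat -> i <> j -> 0 < r2 x i j.
Proof.
  intros H Hi Hj Hij. destruct (H i j Hi Hj Hij) as [a [Ha Hd]].
  unfold r2, sumR; simpl.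
  assert (0 <= (x i 0%nat - x j 0%nat) ^ 2) by apply pow2_ge_0.
  assert (0 <= (x i 1%nat - x j 1%nat) ^ 2) by apply pow2_ge_0.
  assert (0 <= (x i 2%nat - x j 2%nat) ^ 2) by apply pow2_ge_0.
  assert (Hp : 0 < (x i a - x j a) ^ 2) by (apply sq_pos; intro; apply Hd; lra).
  destruct a as [|[|[|a]]]; try lia; lra.
Qed.

Lemma isd_upd x k b i a :
  is_derive (fun t => upd x k b t i a) (x k b) (d2 k i b a).
Proof.
  unfold upd, d2. rewrite (Nat.eqb_sym k i), (Nat.eqb_sym b a).
  destruct (andb (Nat.eqb i k) (Nat.eqb a b)).
  - apply isd_id.
  - apply isd_const.
Qed.

Lemma isd_sq (g : R -> R) (x d : R) : is_derive g x d -> is_derive (fun t => (g t) ^ 2) x (2 * g x * d).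
Proof. intros H. eapply isd_ext. { apply (is_derive_ext (fun t => g t * g t)). { intro t. change (g t * g t = g t ^ 2). ring. }
  apply isd_mult; exact H. } ring. Qed.

Lemma isd_minus (f g : R -> R) (x a b : R) : is_derive f x a -> is_derive g x b ->
  is_derive (fun t => f t - g t) x (a - b).
Proof. intros Ha Hb. eapply isd_ext. { apply (is_derive_ext (fun t => f t + (-1) * g t)). { intro t. change (f t + (-1) * g t = f t - g t). ring. }
  apply isd_plus; [exact Ha| apply (is_derive_scal g x (-1) b Hb)]. } ring. Qed.

Lemma d2_out k i b a : (3 <= b)%nat -> (a < 3)%nat -> d2 k i b a = 0.
Proof. intros. unfold d2. destruct (Nat.eqb_spec b a); [lia|]. rewrite Bool.andb_false_r. reflexivity. Qed.

Lemma D1_Q N x p i j k b : noCollision N x -> (i < N)%nat -> (j < N)%nat -> i <> j ->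
  is_derive (fun t => / sqrt (r2 (upd x k b t) i j)) (x k b)
    (ev (dE (DX k b) (Qc i j)) x p).
Proof.
  intros HU Hi Hj Hij.
  pose proof (r2_pos N x i j HU Hi Hj Hij) as Hr.
  set (g := fun t => r2 (upd x k b t) i j).
  assert (Hg : is_derive g (x k b) (sumR 3 (fun a => 2 * (x i a - x j a) * (d2 k i b a - d2 k j b a)))).
  { unfold g, r2. apply isd_sumR. intros a Ha.
    eapply isd_ext. { apply isd_sq. apply isd_minus; apply isd_upd. }
    cbv beta. rewrite upd_same. reflexivity. }
  assert (Hg0 : g (x k b) = r2 x i j) by (unfold g; rewrite upd_same; reflexivity).
  assert (Hs : is_derive (fun t => sqrt (g t)) (x k b) (sumR 3 (fun a => 2 * (x i a - x j a) * (d2 k i b a - d2 k j b a)) / (2 * sqrt (g (x k b))))).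
  { apply is_derive_sqrt; [exact Hg| rewrite Hg0; exact Hr]. }
  assert (Hsq : 0 < sqrt (r2 x i j)) by (apply sqrt_lt_R0; exact Hr).
  eapply isd_ext. { apply (is_derive_inv _ _ _ Hs). rewrite Hg0. lra. }
  rewrite Hg0.
  assert (Hss : sqrt (r2 x i j) * sqrt (r2 x i j) = r2 x i j) by (apply sqrt_sqrt; lra).
  simpl. unfold sumR; simpl.
  set (s := sqrt (r2 x i j)) in *.
  destruct (Nat.ltb_spec b 3) as [Hb|Hb].
  - destruct b as [|[|[|b]]]; try lia; unfold d2, dl; simpl;
    rewrite ?Nat.eqb_refl; simpl;
    destruct (Nat.eqb k i), (Nat.eqb k j); simpl; unfold s in *; match goal with |- ?a = ?b => change (@eq R a b) end; field; lra.
  - rewrite !(d2_out k i b), !(d2_out k j b) by lia. simpl. unfold s in *; match goal with |- ?a = ?b => change (@eq R a b) end; field; lra.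
Qed.

Lemma D1 N x p e d : wfE N e -> noCollision N x ->
  is_derive (lineF (ev e) d x p) (basev d x p) (ev (dE d e) x p).
Proof.
  intros Hw HU. induction e; simpl in Hw.
  - destruct d; apply isd_const.
  - destruct d; simpl.
    + apply isd_upd.
    + apply isd_const.
  - destruct d; simpl.
    + apply isd_const.
    + apply isd_upd.
  - destruct d.
    + destruct Hw as [Hi [Hj Hij]]. apply (D1_Q N x p i j k b HU Hi Hj Hij).
    + simpl. apply isd_const.
  - destruct Hw as [H1 H2]. simpl.
    apply (is_derive_ext (fun t => lineF (ev e1) d x p t + lineF (ev e2) d x p t)).
    { intro t; destruct d; reflexivity. }
    apply (isd_plus (lineF (ev e1) d x p) (lineF (ev e2) d x p)); auto.
  - destruct Hw as [H1 H2]. simpl.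
    apply (is_derive_ext (fun t => lineF (ev e1) d x p t * lineF (ev e2) d x p t)).
    { intro t; destruct d; reflexivity. }
    eapply isd_ext.
    { apply (isd_mult (lineF (ev e1) d x p) (lineF (ev e2) d x p)); auto. }
    rewrite !lineF_base. reflexivity.
Qed.

Lemma dl_eq k i : dl k i = if Nat.eqb k i then 1 else 0.
Proof. reflexivity. Qed.

Lemma D2 e d1 d2 x p : ev (dE d1 (dE d2 e)) x p = ev (dE d2 (dE d1 e)) x p.
Proof.
  induction e; simpl.
  - reflexivity.
  - destruct d1, d2; reflexivity.
  - destruct d1, d2; reflexivity.
  - destruct d1 as [k1 b1|k1 b1], d2 as [k2 b2|k2 b2]; simpl; try ring.
    + destruct (Nat.ltb b1 3) eqn:E1; destruct (Nat.ltb b2 3) eqn:E2; simpl; rewrite ?E1, ?E2; simpl; try ring;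
      unfold d2, dl;
      destruct (Nat.eqb_spec b1 b2) as [->|Hn]; rewrite ?Nat.eqb_refl;
      try rewrite (proj2 (Nat.eqb_neq b1 b2) Hn); try rewrite (proj2 (Nat.eqb_neq b2 b1)) by auto;
      destruct (Nat.eqb k1 i), (Nat.eqb k1 j), (Nat.eqb k2 i), (Nat.eqb k2 j); simpl; first [ring | congruence].
    + destruct (Nat.ltb b1 3) eqn:F1; simpl; rewrite ?F1; simpl; ring.
    + destruct (Nat.ltb b2 3) eqn:F2; simpl; rewrite ?F2; simpl; ring.
  - rewrite IHe1, IHe2. reflexivity.
  - rewrite IHe1, IHe2. ring.
Qed.

Definition sumE (n : nat) (f : nat -> E) : E := fold_right EAdd (Cst 0) (map f (seq 0 n)).

Lemma sumE_S n f : forall x p, ev (sumE (S n) f) x p = ev (sumE n f) x p + ev (f n) x p.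
Proof.
  intros. unfold sumE. rewrite seq_S, map_app, fold_right_app. simpl.
  induction (map f (seq 0 n)); simpl; [ring|]. rewrite IHl. ring.
Qed.
Lemma ev_sumE n f x p : ev (sumE n f) x p = sumR n (fun i => ev (f i) x p).
Proof. induction n; [reflexivity|]. rewrite sumE_S, sumR_S, IHn. reflexivity. Qed.
Lemma dE_sumE d n f : dE d (sumE n f) = sumE n (fun i => dE d (f i)).
Proof. unfold sumE. induction (seq 0 n); simpl; [reflexivity|]. rewrite IHl. reflexivity. Qed.
Lemma wf_sumE N n f : (forall i, (i < n)%nat -> wfE N (f i)) -> wfE N (sumE n f).
Proof.
  unfold sumE. intros H. assert (Hs : forall i, In i (seq 0 n) -> wfE N (f i)).
  { intros i Hi. apply in_seq in Hi. apply H. lia. }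
  induction (seq 0 n); simpl; [exact I|]. split; [apply Hs; left; auto| apply IHl; intros; apply Hs; right; auto].
Qed.

Definition brE (N : nat) (e1 e2 : E) : E :=
  sumE N (fun i => sumE 3 (fun a =>
    EAdd (EMul (dE (DX i a) e1) (dE (DP i a) e2))
        (EMul (Cst (-1)) (EMul (dE (DP i a) e1) (dE (DX i a) e2))))).

Fixpoint wf_dE N e d : wfE N e -> wfE N (dE d e).
Proof.
  destruct e; simpl; intros H; try exact I.
  - destruct d; exact I.
  - destruct d; exact I.
  - destruct d; [destruct (Nat.ltb b 3)|]; simpl; tauto.
  - destruct H; split; apply wf_dE; auto.
  - destruct H; repeat split; try apply wf_dE; auto.
Qed.

Lemma wf_brE N a b : wfE N a -> wfE N b -> wfE N (brE N a b).
Proof. intros. unfold brE. apply wf_sumE; intros. apply wf_sumE; intros.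
  simpl. repeat split; try apply wf_dE; auto. Qed.

Notation SS N F := (sumR N (fun i => sumR 3 (fun a => F i a))).

Lemma ev_brE N a b x p : ev (brE N a b) x p =
  SS N (fun i al => ev (dE (DX i al) a) x p * ev (dE (DP i al) b) x p
                  - ev (dE (DP i al) a) x p * ev (dE (DX i al) b) x p).
Proof. unfold brE. rewrite ev_sumE. apply sumR_ext; intros. rewrite ev_sumE.
  apply sumR_ext; intros. simpl. ring. Qed.

Lemma ev_dE_brE N u b c x p : ev (dE u (brE N b c)) x p =
  SS N (fun j be =>
     ev (dE u (dE (DX j be) b)) x p * ev (dE (DP j be) c) x p
   + ev (dE (DX j be) b) x p * ev (dE u (dE (DP j be) c)) x p
   - (ev (dE u (dE (DP j be) b)) x p * ev (dE (DX j be) c) x p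
   + ev (dE (DP j be) b) x p * ev (dE u (dE (DX j be) c)) x p)).
Proof. unfold brE. rewrite dE_sumE, ev_sumE. apply sumR_ext; intros.
  rewrite dE_sumE, ev_sumE. apply sumR_ext; intros. simpl. ring. Qed.

Lemma SS_plus N F G : SS N (fun i a => F i a + G i a) = SS N F + SS N G.
Proof. rewrite <- sumR_plus. apply sumR_ext; intros. apply sumR_plus. Qed.
Lemma SS_swap N H :
  SS N (fun i a => SS N (fun j b => H i a j b)) = SS N (fun j b => SS N (fun i a => H i a j b)).
Proof.
  transitivity (sumR N (fun i => sumR N (fun j => sumR 3 (fun a => sumR 3 (fun b => H i a j b))))).
  { apply sumR_ext; intros i _. apply (sumR_swap 3 N (fun a j => sumR 3 (fun b => H i a j b))). }
  rewrite sumR_swap. apply sumR_ext; intros j _.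
  transitivity (sumR N (fun i => sumR 3 (fun b => sumR 3 (fun a => H i a j b)))).
  { apply sumR_ext; intros i _. apply sumR_swap. }
  apply sumR_swap.
Qed.

Lemma SS_scal N c f : SS N (fun j b => c * f j b) = c * SS N f.
Proof. rewrite <- sumR_scal. apply sumR_ext; intros. apply sumR_scal. Qed.

Lemma SS_lin N A B f g : A * SS N f - B * SS N g = SS N (fun j b => A * f j b - B * g j b).
Proof.
  replace (A * SS N f - B * SS N g) with (SS N (fun j b => A * f j b) + SS N (fun j b => (-B) * g j b)).
  { rewrite <- SS_plus. apply sumR_ext; intros; apply sumR_ext; intros. ring. }
  rewrite !SS_scal. ring.
Qed.

Section Jac.
Variables (N : nat) (x p : Coord).
Definition Xv a i al := ev (dE (DX i al) a) x p.
Definition Pv a i al := ev (dE (DP i al) a) x p.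
Definition D2v u v a := ev (dE u (dE v a)) x p.

Definition JTc a b c i al j be :=
  Xv a i al * (Xv b j be * D2v (DP i al) (DP j be) c - Pv b j be * D2v (DP i al) (DX j be) c)
  - Pv a i al * (Xv b j be * D2v (DX i al) (DP j be) c - Pv b j be * D2v (DX i al) (DX j be) c).
Definition JTb a b c i al j be :=
  Xv a i al * (D2v (DP i al) (DX j be) b * Pv c j be - D2v (DP i al) (DP j be) b * Xv c j be)
  - Pv a i al * (D2v (DX i al) (DX j be) b * Pv c j be - D2v (DX i al) (DP j be) b * Xv c j be).

Lemma ev_br_br a b c : ev (brE N a (brE N b c)) x p =
  SS N (fun i al => SS N (fun j be => JTc a b c i al j be + JTb a b c i al j be)).
Proof.
  rewrite ev_brE. apply sumR_ext; intros i _. apply sumR_ext; intros al _.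
  rewrite !ev_dE_brE. rewrite SS_lin. unfold JTc, JTb, Xv, Pv, D2v.
  apply sumR_ext; intros j _. apply sumR_ext; intros be _. ring.
Qed.
Lemma pairJ a b c :
  SS N (fun i al => SS N (fun j be => JTc a b c i al j be)) +
  SS N (fun i al => SS N (fun j be => JTb b c a i al j be)) = 0.
Proof.
  transitivity (SS N (fun i al => SS N (fun j be => JTc a b c i al j be)) + SS N (fun i al => SS N (fun j be => JTb b c a j be i al))).
  { f_equal. exact (SS_swap N (fun i al j be => JTb b c a i al j be)). }
  rewrite <- SS_plus. apply sumR_zero; intros i _. apply sumR_zero; intros al _.
  rewrite <- SS_plus. apply sumR_zero; intros j _. apply sumR_zero; intros be _.
  unfold JTc, JTb, D2v.
  rewrite (D2 c (DP j be) (DX i al)), (D2 c (DP j be) (DP i al)), (D2 c (DX j be) (DX i al)), (D2 c (DX j be) (DP i al)).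
  ring.
Qed.

Lemma SS2_plus F G : SS N (fun i al => SS N (fun j be => F i al j be + G i al j be)) =
  SS N (fun i al => SS N (fun j be => F i al j be)) + SS N (fun i al => SS N (fun j be => G i al j be)).
Proof. rewrite <- SS_plus. apply sumR_ext; intros; apply sumR_ext; intros. apply SS_plus. Qed.

Lemma JacE a b c : ev (brE N a (brE N b c)) x p + ev (brE N b (brE N c a)) x p + ev (brE N c (brE N a b)) x p = 0.
Proof.
  rewrite !ev_br_br, !SS2_plus.
  pose proof (pairJ a b c). pose proof (pairJ b c a). pose proof (pairJ c a b). lra.
Qed.
End Jac.

Lemma nc_of_r2 N x : (forall i j, (i < N)%nat -> (j < N)%nat -> i <> j -> 0 < r2 x i j) -> noCollision N x.
Proof.
  intros H i j Hi Hj Hij. specialize (H i j Hi Hj Hij).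
  destruct (Req_dec (x i 0%nat) (x j 0%nat)) as [E0|E0]; [|exists 0%nat; split; [lia|auto]].
  destruct (Req_dec (x i 1%nat) (x j 1%nat)) as [E1|E1]; [|exists 1%nat; split; [lia|auto]].
  destruct (Req_dec (x i 2%nat) (x j 2%nat)) as [E2|E2]; [|exists 2%nat; split; [lia|auto]].
  exfalso. unfold r2, sumR in H. simpl in H. rewrite E0, E1, E2 in H. lra.
Qed.

Lemma r2_line_der x i j k b :
  ex_derive (fun t => r2 (upd x k b t) i j) (x k b).
Proof.
  eexists. unfold r2. apply isd_sumR. intros a Ha.
  apply isd_sq. apply isd_minus; apply isd_upd.
Qed.

Lemma loc_pos (f : R -> R) t0 : ex_derive f t0 -> 0 < f t0 -> locally t0 (fun t => 0 < f t).
Proof.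
  intros Hd Hp. assert (Hc : continuity_pt f t0).
  { apply continuity_pt_filterlim. apply (ex_derive_continuous f t0 Hd). }
  apply continuity_pt_locally with (eps := mkposreal _ Hp) in Hc.
  eapply filter_imp; [|exact Hc]. simpl. intros t Ht. apply Rabs_def2 in Ht. lra.
Qed.

Lemma loc_forall n (P : nat -> R -> Prop) t0 :
  (forall i, (i < n)%nat -> locally t0 (P i)) -> locally t0 (fun t => forall i, (i < n)%nat -> P i t).
Proof.
  induction n; intros H.
  - apply filter_forall. intros; lia.
  - eapply filter_imp; [|apply filter_and; [apply IHn; intros; apply H; lia | apply (H n); lia]].
    intros t [H1 H2] i Hi. destruct (Nat.eq_dec i n); [subst; auto| apply H1; lia].
Qed.

Lemma U_open N x k b : noCollision N x -> locally (x k b) (fun t => noCollision N (upd x k b t)).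
Proof.
  intros HU.
  eapply filter_imp; [intros t Ht; apply nc_of_r2; intros i j Hi Hj Hij; exact (Ht i Hi j Hj Hij)|].
  apply loc_forall; intros i Hi. apply loc_forall; intros j Hj.
  destruct (Nat.eq_dec i j) as [->|Hij].
  - apply filter_forall. intros t Hc; congruence.
  - eapply filter_imp; [intros t Ht _; exact Ht|].
    apply (loc_pos (fun t => r2 (upd x k b t) i j)); [apply r2_line_der|].
    rewrite upd_same. apply (r2_pos N x i j HU Hi Hj Hij).
Qed.

Definition eqU (N : nat) (f g : Fun) := forall x p, noCollision N x -> f x p = g x p.

Lemma dX_ext N f g k b x p : noCollision N x -> eqU N f g -> dX f k b x p = dX g k b x p.
Proof.
  intros HU H. unfold dX. apply Derive_ext_loc.
  eapply filter_imp; [|apply (U_open N x k b HU)]. intros t Ht. apply H; auto.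
Qed.
Lemma dP_ext N f g k b x p : noCollision N x -> eqU N f g -> dP f k b x p = dP g k b x p.
Proof. intros HU H. unfold dP. apply Derive_ext. intros t. apply H; auto. Qed.

Lemma poisson_ext N f f' g g' : eqU N f f' -> eqU N g g' -> eqU N (poisson N f g) (poisson N f' g').
Proof.
  intros Hf Hg x p HU. unfold poisson. apply sumR_ext; intros i _. apply sumR_ext; intros a _.
  rewrite (dX_ext N f f'), (dP_ext N f f'), (dX_ext N g g'), (dP_ext N g g'); auto.
Qed.

Definition Smooth (N : nat) (f : Fun) := exists e, wfE N e /\ eqU N f (ev e).

Lemma dX_sm N f e k b x p : wfE N e -> eqU N f (ev e) -> noCollision N x ->
  dX f k b x p = ev (dE (DX k b) e) x p.
Proof.
  intros Hw Hf HU. rewrite (dX_ext N f (ev e)); auto. unfold dX.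
  apply is_derive_unique. exact (D1 N x p e (DX k b) Hw HU).
Qed.
Lemma dP_sm N f e k b x p : wfE N e -> eqU N f (ev e) -> noCollision N x ->
  dP f k b x p = ev (dE (DP k b) e) x p.
Proof.
  intros Hw Hf HU. rewrite (dP_ext N f (ev e)); auto. unfold dP.
  apply is_derive_unique. exact (D1 N x p e (DP k b) Hw HU).
Qed.

Lemma poisson_ev N f g ef eg : wfE N ef -> wfE N eg -> eqU N f (ev ef) -> eqU N g (ev eg) ->
  eqU N (poisson N f g) (ev (brE N ef eg)).
Proof.
  intros Hwf Hwg Hf Hg x p HU. unfold poisson. rewrite ev_brE.
  apply sumR_ext; intros i _. apply sumR_ext; intros a _.
  rewrite (dX_sm N f ef), (dP_sm N f ef), (dX_sm N g eg), (dP_sm N g eg); auto.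
Qed.

Lemma sm_poisson N f g : Smooth N f -> Smooth N g -> Smooth N (poisson N f g).
Proof. intros [ef [Hwf Hf]] [eg [Hwg Hg]]. exists (brE N ef eg). split; [apply wf_brE; auto|].
  apply poisson_ev; auto. Qed.
Lemma sm_add N f g : Smooth N f -> Smooth N g -> Smooth N (addF f g).
Proof. intros [ef [Hwf Hf]] [eg [Hwg Hg]]. exists (EAdd ef eg). split; [split; auto|].
  intros x p HU. unfold addF. simpl. rewrite Hf, Hg; auto. Qed.
Lemma sm_scale N c f : Smooth N f -> Smooth N (scaleF c f).
Proof. intros [ef [Hwf Hf]]. exists (EMul (Cst c) ef). split; [split; simpl; auto|].
  intros x p HU. unfold scaleF. simpl. rewrite Hf; auto. Qed.
Lemma sm_zero N : Smooth N zeroF.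
Proof. exists (Cst 0). split; [exact I|]. intros x p _. reflexivity. Qed.
Lemma sm_ext N f g : eqU N f g -> Smooth N g -> Smooth N f.
Proof. intros H [e [Hw He]]. exists e. split; auto. intros x p HU. rewrite H, He; auto. Qed.

Lemma eqU_refl N f : eqU N f f. Proof. intros x p _; reflexivity. Qed.
Lemma eqU_sym N f g : eqU N f g -> eqU N g f. Proof. intros H x p HU; symmetry; auto. Qed.
Lemma eqU_trans N f g h : eqU N f g -> eqU N g h -> eqU N f h.
Proof. intros H1 H2 x p HU; rewrite H1, H2; auto. Qed.

Lemma ev_brE_addl N a b c x p : ev (brE N (EAdd a b) c) x p = ev (brE N a c) x p + ev (brE N b c) x p.
Proof. rewrite !ev_brE, <- SS_plus. apply sumR_ext; intros; apply sumR_ext; intros. simpl. ring. Qed.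
Lemma ev_brE_addr N a b c x p : ev (brE N a (EAdd b c)) x p = ev (brE N a b) x p + ev (brE N a c) x p.
Proof. rewrite !ev_brE, <- SS_plus. apply sumR_ext; intros; apply sumR_ext; intros. simpl. ring. Qed.
Lemma ev_brE_scl N r a c x p : ev (brE N (EMul (Cst r) a) c) x p = r * ev (brE N a c) x p.
Proof. rewrite !ev_brE, <- SS_scal. apply sumR_ext; intros; apply sumR_ext; intros. simpl. ring. Qed.
Lemma ev_brE_scr N r a c x p : ev (brE N c (EMul (Cst r) a)) x p = r * ev (brE N c a) x p.
Proof. rewrite !ev_brE, <- SS_scal. apply sumR_ext; intros; apply sumR_ext; intros. simpl. ring. Qed.

Lemma poisson_addl N f g h : Smooth N f -> Smooth N g -> Smooth N h ->
  eqU N (poisson N (addF f g) h) (addF (poisson N f h) (poisson N g h)).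
Proof.
  intros [ef [Hwf Hf]] [eg [Hwg Hg]] [eh [Hwh Hh]] x p HU.
  unfold addF at 2.
  rewrite (poisson_ev N (addF f g) h (EAdd ef eg) eh), (poisson_ev N f h ef eh), (poisson_ev N g h eg eh); auto.
  - apply ev_brE_addl.
  - split; auto.
  - intros y q Hy. unfold addF. simpl. rewrite Hf, Hg; auto.
Qed.
Lemma poisson_addr N f g h : Smooth N f -> Smooth N g -> Smooth N h ->
  eqU N (poisson N h (addF f g)) (addF (poisson N h f) (poisson N h g)).
Proof.
  intros [ef [Hwf Hf]] [eg [Hwg Hg]] [eh [Hwh Hh]] x p HU.
  unfold addF at 2.
  rewrite (poisson_ev N h (addF f g) eh (EAdd ef eg)), (poisson_ev N h f eh ef), (poisson_ev N h g eh eg); auto.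
  - apply ev_brE_addr.
  - split; auto.
  - intros y q Hy. unfold addF. simpl. rewrite Hf, Hg; auto.
Qed.
Lemma poisson_scl N r f h : Smooth N f -> Smooth N h ->
  eqU N (poisson N (scaleF r f) h) (scaleF r (poisson N f h)).
Proof.
  intros [ef [Hwf Hf]] [eh [Hwh Hh]] x p HU. unfold scaleF at 2.
  rewrite (poisson_ev N (scaleF r f) h (EMul (Cst r) ef) eh), (poisson_ev N f h ef eh); auto.
  - apply ev_brE_scl.
  - split; simpl; auto.
  - intros y q Hy. unfold scaleF. simpl. rewrite Hf; auto.
Qed.
Lemma poisson_scr N r f h : Smooth N f -> Smooth N h ->
  eqU N (poisson N h (scaleF r f)) (scaleF r (poisson N h f)).
Proof.
  intros [ef [Hwf Hf]] [eh [Hwh Hh]] x p HU. unfold scaleF at 2.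
  rewrite (poisson_ev N h (scaleF r f) eh (EMul (Cst r) ef)), (poisson_ev N h f eh ef); auto.
  - apply ev_brE_scr.
  - split; simpl; auto.
  - intros y q Hy. unfold scaleF. simpl. rewrite Hf; auto.
Qed.
Lemma poisson_zerol N h : forall x p, poisson N zeroF h x p = 0.
Proof. intros. unfold poisson. apply sumR_zero; intros; apply sumR_zero; intros.
  unfold dX, dP, zeroF. rewrite !Derive_const. ring. Qed.
Lemma poisson_zeror N h : forall x p, poisson N h zeroF x p = 0.
Proof. intros. unfold poisson. apply sumR_zero; intros; apply sumR_zero; intros.
  unfold dX, dP, zeroF. rewrite !Derive_const. ring. Qed.
Lemma poisson_anti N f g : forall x p, poisson N f g x p = - poisson N g f x p.
Proof. intros. unfold poisson. replace (- _) with ((-1) * sumR N (fun i => sumR 3 (fun a =>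
     dX g i a x p * dP f i a x p - dP g i a x p * dX f i a x p))) by ring. rewrite <- sumR_scal.
  apply sumR_ext; intros. rewrite <- sumR_scal. apply sumR_ext; intros. ring. Qed.
Lemma poisson_self N f : forall x p, poisson N f f x p = 0.
Proof. intros. pose proof (poisson_anti N f f x p). lra. Qed.

Lemma jacobi N f g h : Smooth N f -> Smooth N g -> Smooth N h ->
  forall x p, noCollision N x ->
  poisson N f (poisson N g h) x p + poisson N g (poisson N h f) x p + poisson N h (poisson N f g) x p = 0.
Proof.
  intros [ef [Hwf Hf]] [eg [Hwg Hg]] [eh [Hwh Hh]] x p HU.
  rewrite (poisson_ev N f (poisson N g h) ef (brE N eg eh)), (poisson_ev N g (poisson N h f) eg (brE N eh ef)),
    (poisson_ev N h (poisson N f g) eh (brE N ef eg)); auto using wf_brE, poisson_ev.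
  apply JacE.
Qed.

Inductive LT := LV (n : nat) | LB (a b : LT) | LA (a b : LT) | LS (r : R) (a : LT) | LZ.
Inductive Mon := MV (n : nat) | MB (a b : Mon).

Fixpoint mon_eqb (a b : Mon) : bool :=
  match a, b with
  | MV i, MV j => Nat.eqb i j
  | MB a1 a2, MB b1 b2 => andb (mon_eqb a1 b1) (mon_eqb a2 b2)
  | _, _ => false
  end.
Lemma mon_eqb_eq a b : mon_eqb a b = true -> a = b.
Proof. revert b; induction a; destruct b; simpl; try discriminate.
  - intros H; apply Nat.eqb_eq in H; subst; auto.
  - intros H; apply andb_prop in H; destruct H; f_equal; auto. Qed.

Fixpoint mkey (m : Mon) : list nat :=
  match m with MV n => [S (S n)] | MB a b => 0%nat :: mkey a ++ 1%nat :: mkey b end.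
Fixpoint lexb (l1 l2 : list nat) : bool :=
  match l1, l2 with
  | [], _ => true
  | _ :: _, [] => false
  | a :: r1, b :: r2 => if Nat.ltb a b then true else if Nat.eqb a b then lexb r1 r2 else false
  end.

Definition canon (rel : nat -> nat -> bool) (m1 m2 : Mon) : option (R * Mon) :=
  if mon_eqb m1 m2 then None else
  if (match m1, m2 with MV i, MV j => rel i j | _, _ => false end) then None else
  if lexb (mkey m1) (mkey m2) then Some (1, MB m1 m2) else Some (-1, MB m2 m1).

Definition brc rel (cm1 cm2 : R * Mon) : list (R * Mon) :=
  match canon rel (snd cm1) (snd cm2) with
  | None => [] | Some (s, m) => [(fst cm1 * fst cm2 * s, m)] end.

Fixpoint expand rel (t : LT) : list (R * Mon) :=
  match t with
  | LV n => [(1, MV n)]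
  | LA a b => expand rel a ++ expand rel b
  | LS r a => map (fun cm => (r * fst cm, snd cm)) (expand rel a)
  | LZ => []
  | LB a b => flat_map (fun cm1 => flat_map (fun cm2 => brc rel cm1 cm2) (expand rel b)) (expand rel a)
  end.

Fixpoint Lm (m : Mon) : LT := match m with MV n => LV n | MB a b => LB (Lm a) (Lm b) end.
Definition jacLT (m1 m2 m3 : Mon) : LT :=
  LA (LB (Lm m1) (LB (Lm m2) (Lm m3))) (LA (LB (Lm m2) (LB (Lm m3) (Lm m1))) (LB (Lm m3) (LB (Lm m1) (Lm m2)))).

Section LTsec.
Variable N : nat.
Variable rho : nat -> Fun.
Variable rel : nat -> nat -> bool.
Hypothesis Hsm : forall n, Smooth N (rho n).
Hypothesis Hrel : forall i j, rel i j = true -> eqU N (opbr N (rho i) (rho j)) zeroF.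

Fixpoint interp (t : LT) : Fun :=
  match t with
  | LV n => rho n | LB a b => opbr N (interp a) (interp b)
  | LA a b => addF (interp a) (interp b) | LS r a => scaleF r (interp a) | LZ => zeroF
  end.
Fixpoint imon (m : Mon) : Fun :=
  match m with MV n => rho n | MB a b => opbr N (imon a) (imon b) end.

Definition sumLv (l : list (R * Mon)) (x p : Coord) : R :=
  fold_right (fun cm acc => fst cm * imon (snd cm) x p + acc) 0 l.

Lemma sm_imon m : Smooth N (imon m).
Proof. induction m; simpl; auto. unfold opbr. apply sm_poisson; auto. Qed.
Lemma sm_interp t : Smooth N (interp t).
Proof. induction t; simpl; auto using sm_add, sm_scale, sm_zero.
  unfold opbr. apply sm_poisson; auto. Qed.
Lemma sm_sumL l : Smooth N (sumLv l).
Proof. induction l as [|[c m] l IH].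
  - apply (sm_ext N _ zeroF); [intros x p _; reflexivity| apply sm_zero].
  - apply (sm_ext N _ (addF (scaleF c (imon m)) (sumLv l))); [intros x p _; reflexivity|].
    apply sm_add; [apply sm_scale, sm_imon| exact IH].
Qed.

Lemma sumLv_app l1 l2 x p : sumLv (l1 ++ l2) x p = sumLv l1 x p + sumLv l2 x p.
Proof. induction l1; simpl; [ring|]. unfold sumLv in *. simpl. rewrite IHl1. ring. Qed.
Lemma sumLv_map r l x p : sumLv (map (fun cm => (r * fst cm, snd cm)) l) x p = r * sumLv l x p.
Proof. induction l; simpl; [ring|]. unfold sumLv in *. simpl. rewrite IHl. ring. Qed.
Lemma sumLv_flat_map (F : R * Mon -> list (R * Mon)) l x p :
  sumLv (flat_map F l) x p = fold_right (fun cm acc => sumLv (F cm) x p + acc) 0 l.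
Proof. induction l; cbn [flat_map fold_right]; [reflexivity|]. rewrite sumLv_app, IHl. reflexivity. Qed.

Lemma brc_pt cm1 cm2 x p : noCollision N x ->
  sumLv (brc rel cm1 cm2) x p = fst cm1 * fst cm2 * opbr N (imon (snd cm1)) (imon (snd cm2)) x p.
Proof.
  intros HU. destruct cm1 as [c1 m1], cm2 as [c2 m2]. unfold brc, canon; simpl.
  destruct (mon_eqb m1 m2) eqn:E.
  - apply mon_eqb_eq in E. subst. unfold opbr. rewrite poisson_self. simpl. ring.
  - destruct (match m1 with MV i => match m2 with MV j => rel i j | MB _ _ => false end | MB _ _ => false end) eqn:E2.
    + destruct m1; destruct m2; try discriminate. simpl. rewrite (Hrel _ _ E2 x p HU). unfold zeroF; simpl; ring.
    + destruct (lexb (mkey m1) (mkey m2)); unfold sumLv; simpl; [ring|].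
      unfold opbr. rewrite (poisson_anti N (imon m1) (imon m2)). ring.
Qed.

Lemma opbr_sumL_r f l : Smooth N f -> eqU N (opbr N f (sumLv l))
   (fun x p => fold_right (fun cm acc => fst cm * opbr N f (imon (snd cm)) x p + acc) 0 l).
Proof.
  intros Hf. induction l as [|[c m] l IH]; intros x p HU.
  - simpl. unfold opbr. apply (poisson_zerol N f x p).
  - unfold opbr in *. simpl.
    rewrite (poisson_ext N (sumLv ((c, m) :: l)) (addF (scaleF c (imon m)) (sumLv l)) f f); auto;
      [| intros y q _; reflexivity | apply eqU_refl].
    rewrite (poisson_addl N); auto using sm_scale, sm_imon, sm_sumL.
    unfold addF. rewrite (poisson_scl N); auto using sm_imon. unfold scaleF. rewrite IH; auto.
Qed.

Lemma opbr_sumL l1 l2 : eqU N (opbr N (sumLv l1) (sumLv l2))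
   (fun x p => fold_right (fun cm1 acc => fold_right (fun cm2 acc2 =>
        fst cm1 * fst cm2 * opbr N (imon (snd cm1)) (imon (snd cm2)) x p + acc2) 0 l2 + acc) 0 l1).
Proof.
  induction l1 as [|[c m] l IH]; intros x p HU.
  - simpl. unfold opbr. apply (poisson_zeror N).
  - unfold opbr in *. simpl.
    rewrite (poisson_ext N (sumLv l2) (sumLv l2) (sumLv ((c, m) :: l)) (addF (scaleF c (imon m)) (sumLv l))); auto;
      [| apply eqU_refl | intros y q _; reflexivity].
    rewrite (poisson_addr N); auto using sm_scale, sm_imon, sm_sumL.
    unfold addF. rewrite (poisson_scr N); auto using sm_imon, sm_sumL. unfold scaleF. rewrite IH; auto.
    f_equal. pose proof (opbr_sumL_r (imon m) l2 (sm_imon m) x p HU) as H. unfold opbr in H. rewrite H.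
    clear. induction l2 as [|[c2 m2] l2 IH]; simpl; [ring|]. rewrite <- IH. ring.
Qed.

Lemma expand_sound t : eqU N (interp t) (sumLv (expand rel t)).
Proof.
  induction t; intros x p HU; cbn [interp expand].
  - unfold sumLv; simpl; ring.
  - rewrite sumLv_flat_map.
    unfold opbr. rewrite (poisson_ext N _ _ _ _ IHt2 IHt1 x p HU).
    pose proof (opbr_sumL (expand rel t1) (expand rel t2) x p HU) as H. unfold opbr in H. rewrite H. clear H IHt1 IHt2.
    induction (expand rel t1) as [|cm1 l1 IH1]; cbn [fold_right]; [reflexivity|]. rewrite IH1. f_equal.
    rewrite sumLv_flat_map. clear IH1. induction (expand rel t2) as [|cm2 l2 IH2]; cbn [fold_right]; [reflexivity|].
    rewrite IH2, brc_pt; auto.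
  - unfold addF. rewrite sumLv_app, IHt1, IHt2; auto.
  - unfold scaleF. rewrite sumLv_map, IHt; auto.
  - reflexivity.
Qed.

Lemma interp_Lm m : interp (Lm m) = imon m.
Proof. induction m; simpl; auto. rewrite IHm1, IHm2; auto. Qed.

Lemma jac_inst m1 m2 m3 x p : noCollision N x -> sumLv (expand rel (jacLT m1 m2 m3)) x p = 0.
Proof.
  intros HU. rewrite <- expand_sound; auto. unfold jacLT. simpl. rewrite !interp_Lm.
  unfold addF, opbr.
  set (a := imon m1). set (b := imon m2). set (c := imon m3).
  assert (Ha : Smooth N a) by apply sm_imon. assert (Hb : Smooth N b) by apply sm_imon. assert (Hc : Smooth N c) by apply sm_imon.
  rewrite (poisson_anti N (poisson N c b) a), (poisson_anti N (poisson N a c) b), (poisson_anti N (poisson N b a) c).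
  rewrite (poisson_ext N a a (poisson N c b) (scaleF (-1) (poisson N b c))); auto;
    [|apply eqU_refl| intros y q _; unfold scaleF; rewrite poisson_anti; ring].
  rewrite (poisson_ext N b b (poisson N a c) (scaleF (-1) (poisson N c a))); auto;
    [|apply eqU_refl| intros y q _; unfold scaleF; rewrite poisson_anti; ring].
  rewrite (poisson_ext N c c (poisson N b a) (scaleF (-1) (poisson N a b))); auto;
    [|apply eqU_refl| intros y q _; unfold scaleF; rewrite poisson_anti; ring].
  rewrite !poisson_scr; auto using sm_poisson. unfold scaleF.
  pose proof (jacobi N a b c Ha Hb Hc x p HU). lra.
Qed.

Lemma jac4_inst m0 m1 m2 m3 x p : noCollision N x ->
  sumLv (expand rel (LB (Lm m0) (jacLT m1 m2 m3))) x p = 0.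
Proof.
  intros HU. rewrite <- expand_sound; auto. cbn [interp]. unfold opbr.
  rewrite (poisson_ext N (interp (jacLT m1 m2 m3)) zeroF (interp (Lm m0)) (interp (Lm m0))); auto.
  - apply poisson_zerol.
  - intros y q Hy. rewrite expand_sound, jac_inst; auto.
  - apply eqU_refl.
Qed.

Lemma expand_pt t x p : noCollision N x -> interp t x p = sumLv (expand rel t) x p.
Proof. intros HU; apply expand_sound; auto. Qed.
End LTsec.

Definition SE N (A B : Ser) := forall k, (1 <= k <= 4)%nat -> eqU N (A k) (B k).
Lemma SE_refl N A : SE N A A. Proof. intros k _; apply eqU_refl. Qed.
Lemma SE_sym N A B : SE N A B -> SE N B A. Proof. intros H k Hk; apply eqU_sym; auto. Qed.
Lemma SE_trans N A B C : SE N A B -> SE N B C -> SE N A C.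
Proof. intros H1 H2 k Hk; eapply eqU_trans; eauto. Qed.

Lemma brS_cong N A A' B B' : SE N A A' -> SE N B B' -> SE N (brS N A B) (brS N A' B').
Proof.
  intros HA HB k Hk x p HU. unfold brS.
  assert (Hk4 : Nat.leb k 4 = true) by (apply Nat.leb_le; lia). rewrite Hk4.
  apply sumR_ext; intros a Ha. destruct a as [|a]; [simpl; ring|]. simpl.
  unfold opbr. rewrite (poisson_ext N (B (k - S a)%nat) (B' (k - S a)%nat) (A (S a)) (A' (S a))); auto.
  - apply HB; lia.
  - apply HA; lia.
Qed.
Lemma addS_cong N A A' B B' : SE N A A' -> SE N B B' -> SE N (addS A B) (addS A' B').
Proof. intros HA HB k Hk x p HU. unfold addS, addF. rewrite HA, HB; auto. Qed.
Lemma scaleS_cong N c A A' : SE N A A' -> SE N (scaleS c A) (scaleS c A').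
Proof. intros HA k Hk x p HU. unfold scaleS, scaleF. rewrite HA; auto. Qed.
Lemma bch_cong N X X' Y Y' : SE N X X' -> SE N Y Y' -> SE N (bch N X Y) (bch N X' Y').
Proof.
  intros HX HY. unfold bch. cbv zeta.
  repeat apply addS_cong; auto; apply scaleS_cong; repeat apply brS_cong; auto.
Qed.

Definition serL := nat -> LT.
Definition brSL (A B : serL) : serL := fun k =>
  match k with
  | 2%nat => LB (A 1%nat) (B 1%nat)
  | 3%nat => LA (LB (A 1%nat) (B 2%nat)) (LB (A 2%nat) (B 1%nat))
  | 4%nat => LA (LB (A 1%nat) (B 3%nat)) (LA (LB (A 2%nat) (B 2%nat)) (LB (A 3%nat) (B 1%nat)))
  | _ => LZ end.
Definition addSL (A B : serL) : serL := fun k => LA (A k) (B k).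
Definition scaleSL (c : R) (A : serL) : serL := fun k => LS c (A k).
Definition bchL (X Y : serL) : serL :=
  addSL (addSL X Y)
   (addSL (scaleSL (1/2) (brSL X Y))
    (addSL (scaleSL (1/12) (brSL X (brSL X Y)))
     (addSL (scaleSL (-1/12) (brSL Y (brSL X Y)))
           (scaleSL (-1/24) (brSL Y (brSL X (brSL X Y))))))).

Section SerL.
Variable N : nat.
Variable rho : nat -> Fun.
Definition iS (X : serL) : Ser := fun k => interp N rho (X k).

Lemma brS_L A B : SE N (brS N (iS A) (iS B)) (iS (brSL A B)).
Proof.
  intros k Hk x p HU. unfold brS, iS.
  destruct k as [|[|[|[|[|k]]]]]; try lia; unfold sumR; simpl; unfold addF, zeroF; ring.
Qed.
Lemma addS_L A B : SE N (addS (iS A) (iS B)) (iS (addSL A B)).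
Proof. intros k Hk x p HU. reflexivity. Qed.
Lemma scaleS_L c A : SE N (scaleS c (iS A)) (iS (scaleSL c A)).
Proof. intros k Hk x p HU. reflexivity. Qed.

Lemma brS_L' A B A' B' : SE N A (iS A') -> SE N B (iS B') -> SE N (brS N A B) (iS (brSL A' B')).
Proof. intros; eapply SE_trans; [apply brS_cong; eauto| apply brS_L]. Qed.
Lemma addS_L' A B A' B' : SE N A (iS A') -> SE N B (iS B') -> SE N (addS A B) (iS (addSL A' B')).
Proof. intros; eapply SE_trans; [apply addS_cong; eauto| apply addS_L]. Qed.
Lemma scaleS_L' c A A' : SE N A (iS A') -> SE N (scaleS c A) (iS (scaleSL c A')).
Proof. intros; eapply SE_trans; [apply scaleS_cong; eauto| apply scaleS_L]. Qed.

Lemma bch_L' X Y X' Y' : SE N X (iS X') -> SE N Y (iS Y') -> SE N (bch N X Y) (iS (bchL X' Y')).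
Proof.
  intros HX HY. unfold bch, bchL. cbv zeta.
  repeat first [apply addS_L' | apply scaleS_L' | apply brS_L' | assumption].
Qed.
End SerL.

Definition Zv : serL := fun k => match k with 1%nat => LV 0 | 2%nat => LV 1 | 3%nat => LV 2 | 4%nat => LV 3 | _ => LZ end.
Definition Yv : serL := fun k => match k with 1%nat => LV 4 | 2%nat => LV 5 | 3%nat => LV 6 | 4%nat => LV 7 | _ => LZ end.
Definition Av : serL := fun k => match k with 1%nat => LV 8 | _ => LZ end.
Definition relF (i j : nat) : bool := false.

Lemma assoc_L N rho : (forall n, Smooth N (rho n)) ->
  SE N (iS N rho (bchL (bchL Zv Yv) Av)) (iS N rho (bchL Zv (bchL Yv Av))).
Proof.
  intros Hsm.
  assert (Hrel : forall i j, relF i j = true -> eqU N (opbr N (rho i) (rho j)) zeroF) by (intros; discriminate).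
  intros k Hk. destruct k as [|[|[|[|[|k]]]]]; try lia.
  - intros x p HU. unfold iS.
    rewrite (expand_pt N rho relF Hsm Hrel _ x p HU), (expand_pt N rho relF Hsm Hrel _ x p HU).
    cbn [expand brc canon mon_eqb mkey lexb flat_map map app fst snd sumLv fold_right Nat.eqb Nat.ltb Nat.leb andb orb negb jacLT Lm bchL addSL scaleSL brSL iS Zv Yv Av relF] in *.
    lra.
  - intros x p HU. unfold iS.
    rewrite (expand_pt N rho relF Hsm Hrel _ x p HU), (expand_pt N rho relF Hsm Hrel _ x p HU).
    cbn [expand brc canon mon_eqb mkey lexb flat_map map app fst snd sumLv fold_right Nat.eqb Nat.ltb Nat.leb andb orb negb jacLT Lm bchL addSL scaleSL brSL iS Zv Yv Av relF] in *.
    lra.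
  - intros x p HU. unfold iS.
    rewrite (expand_pt N rho relF Hsm Hrel _ x p HU), (expand_pt N rho relF Hsm Hrel _ x p HU).
    pose proof (jac_inst N rho relF Hsm Hrel (MV 0) (MV 4) (MV 8) x p HU).
    cbn [expand brc canon mon_eqb mkey lexb flat_map map app fst snd sumLv fold_right Nat.eqb Nat.ltb Nat.leb andb orb negb jacLT Lm bchL addSL scaleSL brSL iS Zv Yv Av relF] in *.
    lra.
  - intros x p HU. unfold iS.
    rewrite (expand_pt N rho relF Hsm Hrel _ x p HU), (expand_pt N rho relF Hsm Hrel _ x p HU).
    pose proof (jac_inst N rho relF Hsm Hrel (MV 0) (MV 8) (MV 5) x p HU).
    pose proof (jac_inst N rho relF Hsm Hrel (MV 4) (MV 8) (MV 1) x p HU).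
    pose proof (jac_inst N rho relF Hsm Hrel (MV 4) (MV 8) (MB (MV 0) (MV 4)) x p HU).
    pose proof (jac_inst N rho relF Hsm Hrel (MV 0) (MV 4) (MB (MV 4) (MV 8)) x p HU).
    pose proof (jac4_inst N rho relF Hsm Hrel (MV 0) (MV 0) (MV 4) (MV 8) x p HU).
    pose proof (jac4_inst N rho relF Hsm Hrel (MV 8) (MV 0) (MV 4) (MV 8) x p HU).
    pose proof (jac_inst N rho relF Hsm Hrel (MV 0) (MV 4) (MB (MV 0) (MV 8)) x p HU).
    pose proof (jac_inst N rho relF Hsm Hrel (MV 0) (MV 8) (MB (MV 4) (MV 8)) x p HU).
    cbn [expand brc canon mon_eqb mkey lexb flat_map map app fst snd sumLv fold_right Nat.eqb Nat.ltb Nat.leb andb orb negb jacLT Lm bchL addSL scaleSL brSL iS Zv Yv Av relF] in *.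
    lra.
Qed.

Definition SmS N (A : Ser) := forall k, Smooth N (A k).

Lemma sm_sumR N n (F : nat -> Fun) : (forall i, (i < n)%nat -> Smooth N (F i)) ->
  Smooth N (fun x p => sumR n (fun i => F i x p)).
Proof.
  induction n; intros H.
  - apply (sm_ext N _ zeroF); [intros x p _; reflexivity| apply sm_zero].
  - apply (sm_ext N _ (addF (fun x p => sumR n (fun i => F i x p)) (F n))).
    + intros x p _. unfold addF. rewrite sumR_S. reflexivity.
    + apply sm_add; [apply IHn; intros; apply H; lia| apply H; lia].
Qed.

Lemma sm_ext2 N f g : (forall x p, f x p = g x p) -> Smooth N g -> Smooth N f.
Proof. intros H; apply sm_ext; intros x p _; auto. Qed.
Lemma SmS_brS' N A B : SmS N A -> SmS N B -> SmS N (brS N A B).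
Proof.
  intros HA HB k. unfold brS. destruct (Nat.leb k 4); [|apply sm_zero].
  eapply sm_ext2; [|apply (sm_sumR N k (fun a => scaleF (if Nat.ltb 0 a then 1 else 0) (opbr N (A a) (B (k - a)%nat))))].
  - intros x p. apply sumR_ext; intros. unfold scaleF. ring.
  - intros. apply sm_scale. unfold opbr. apply sm_poisson; auto.
Qed.
Lemma SmS_addS N A B : SmS N A -> SmS N B -> SmS N (addS A B).
Proof. intros HA HB k. apply sm_add; auto. Qed.
Lemma SmS_scaleS N c A : SmS N A -> SmS N (scaleS c A).
Proof. intros HA k. apply sm_scale; auto. Qed.
Lemma SmS_bch N X Y : SmS N X -> SmS N Y -> SmS N (bch N X Y).
Proof. intros. unfold bch; cbv zeta.
  repeat first [apply SmS_addS | apply SmS_scaleS | apply SmS_brS' | assumption]. Qed.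
Lemma SmS_gen N c F : Smooth N F -> SmS N (gen c F).
Proof. intros H k. unfold gen. destruct (Nat.eqb k 1); [apply sm_scale; auto| apply sm_zero]. Qed.
Lemma SmS_zeroS N : SmS N zeroS.
Proof. intros k. apply sm_zero. Qed.

Definition GenOK N (s : Ser) := exists c F, s = gen c F /\ Smooth N F.

Lemma SmS_fold N l Z : List.Forall (GenOK N) l -> SmS N Z -> SmS N (fold_left (bch N) l Z).
Proof.
  revert Z; induction l; intros Z Hl HZ; simpl; auto.
  inversion Hl as [|? ? [c [F [-> HF]]] Hl']; subst.
  apply IHl; auto. apply SmS_bch; auto. apply SmS_gen; auto.
Qed.

Definition rhoA (Zs Ys : Ser) (g : Fun) : nat -> Fun := fun n =>
  match n with
  | 0%nat => Zs 1%nat | 1%nat => Zs 2%nat | 2%nat => Zs 3%nat | 3%nat => Zs 4%nat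
  | 4%nat => Ys 1%nat | 5%nat => Ys 2%nat | 6%nat => Ys 3%nat | 7%nat => Ys 4%nat
  | 8%nat => g | _ => zeroF end.

Lemma assoc1 N Zs Ys c Fn : SmS N Zs -> SmS N Ys -> Smooth N Fn ->
  SE N (bch N (bch N Zs Ys) (gen c Fn)) (bch N Zs (bch N Ys (gen c Fn))).
Proof.
  intros HZ HY HF. set (rho := rhoA Zs Ys (scaleF c Fn)).
  assert (Hsm : forall n, Smooth N (rho n)).
  { intros n. unfold rho, rhoA. destruct n as [|[|[|[|[|[|[|[|[|n]]]]]]]]]; auto using sm_scale, sm_zero. }
  assert (H1 : SE N Zs (iS N rho Zv)).
  { intros k Hk x p HU. destruct k as [|[|[|[|[|k]]]]]; try lia; reflexivity. }
  assert (H2 : SE N Ys (iS N rho Yv)).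
  { intros k Hk x p HU. destruct k as [|[|[|[|[|k]]]]]; try lia; reflexivity. }
  assert (H3 : SE N (gen c Fn) (iS N rho Av)).
  { intros k Hk x p HU. destruct k as [|[|[|[|[|k]]]]]; try lia; reflexivity. }
  eapply SE_trans; [apply bch_L'; [apply bch_L'; eauto| eauto]|].
  eapply SE_trans; [apply assoc_L; auto|].
  apply SE_sym. apply bch_L'; [|apply bch_L']; eauto.
Qed.

Definition Zr : serL := fun _ => LZ.
Lemma bch_zero_r_L N rho : (forall n, Smooth N (rho n)) -> SE N (iS N rho (bchL Zv Zr)) (iS N rho Zv).
Proof.
  intros Hsm.
  assert (Hrel : forall i j, relF i j = true -> eqU N (opbr N (rho i) (rho j)) zeroF) by (intros; discriminate).
  intros k Hk. destruct k as [|[|[|[|[|k]]]]]; try lia; intros x p HU; unfold iS;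
  rewrite (expand_pt N rho relF Hsm Hrel _ x p HU), (expand_pt N rho relF Hsm Hrel _ x p HU);
  cbn [expand brc canon mon_eqb mkey lexb flat_map map app fst snd sumLv fold_right Nat.eqb Nat.ltb Nat.leb andb orb negb jacLT Lm bchL addSL scaleSL brSL iS Zv Zr relF]; lra.
Qed.
Lemma bch_zero_l_L N rho : (forall n, Smooth N (rho n)) -> SE N (iS N rho (bchL Zr Zv)) (iS N rho Zv).
Proof.
  intros Hsm.
  assert (Hrel : forall i j, relF i j = true -> eqU N (opbr N (rho i) (rho j)) zeroF) by (intros; discriminate).
  intros k Hk. destruct k as [|[|[|[|[|k]]]]]; try lia; intros x p HU; unfold iS;
  rewrite (expand_pt N rho relF Hsm Hrel _ x p HU), (expand_pt N rho relF Hsm Hrel _ x p HU);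
  cbn [expand brc canon mon_eqb mkey lexb flat_map map app fst snd sumLv fold_right Nat.eqb Nat.ltb Nat.leb andb orb negb jacLT Lm bchL addSL scaleSL brSL iS Zv Zr relF]; lra.
Qed.

Definition rhoZ (Zs : Ser) : nat -> Fun := fun n =>
  match n with 0%nat => Zs 1%nat | 1%nat => Zs 2%nat | 2%nat => Zs 3%nat | 3%nat => Zs 4%nat | _ => zeroF end.

Lemma bch_zero_r N Zs : SmS N Zs -> SE N (bch N Zs zeroS) Zs.
Proof.
  intros HZ. set (rho := rhoZ Zs).
  assert (Hsm : forall n, Smooth N (rho n)).
  { intros n. unfold rho, rhoZ. destruct n as [|[|[|[|n]]]]; auto using sm_zero. }
  assert (H1 : SE N Zs (iS N rho Zv)).
  { intros k Hk x p HU. destruct k as [|[|[|[|[|k]]]]]; try lia; reflexivity. }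
  assert (H0 : SE N zeroS (iS N rho Zr)).
  { intros k Hk x p HU. reflexivity. }
  eapply SE_trans; [apply bch_L'; eauto|]. eapply SE_trans; [apply bch_zero_r_L; auto|].
  apply SE_sym; auto.
Qed.
Lemma bch_zero_l N Zs : SmS N Zs -> SE N (bch N zeroS Zs) Zs.
Proof.
  intros HZ. set (rho := rhoZ Zs).
  assert (Hsm : forall n, Smooth N (rho n)).
  { intros n. unfold rho, rhoZ. destruct n as [|[|[|[|n]]]]; auto using sm_zero. }
  assert (H1 : SE N Zs (iS N rho Zv)).
  { intros k Hk x p HU. destruct k as [|[|[|[|[|k]]]]]; try lia; reflexivity. }
  assert (H0 : SE N zeroS (iS N rho Zr)).
  { intros k Hk x p HU. reflexivity. }
  eapply SE_trans; [apply bch_L'; eauto|]. eapply SE_trans; [apply bch_zero_l_L; auto|].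
  apply SE_sym; auto.
Qed.

Lemma fold_bch N l Z : List.Forall (GenOK N) l -> SmS N Z ->
  SE N (fold_left (bch N) l Z) (bch N Z (fold_left (bch N) l zeroS)).
Proof.
  induction l as [|g l IH] using rev_ind; intros Hl HZ.
  - simpl. apply SE_sym. apply bch_zero_r; auto.
  - apply List.Forall_app in Hl. destruct Hl as [Hl Hg]. inversion Hg as [|? ? [c [F [-> HF]]]]; subst.
    rewrite !fold_left_app. simpl.
    eapply SE_trans; [apply bch_cong; [apply IH; auto| apply SE_refl]|].
    apply assoc1; auto. apply SmS_fold; auto. apply SmS_zeroS.
Qed.

Definition Lg N (l : list Ser) := fold_left (bch N) l zeroS.

Lemma Lg_app N l1 l2 : List.Forall (GenOK N) l1 -> List.Forall (GenOK N) l2 ->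
  SE N (Lg N (l1 ++ l2)) (bch N (Lg N l1) (Lg N l2)).
Proof.
  intros H1 H2. unfold Lg. rewrite fold_left_app. apply fold_bch; auto. apply SmS_fold; auto. apply SmS_zeroS.
Qed.
Lemma SmS_Lg N l : List.Forall (GenOK N) l -> SmS N (Lg N l).
Proof. intros; apply SmS_fold; auto; apply SmS_zeroS. Qed.

Definition gHs : serL := fun k => match k with 1%nat => LS (1/2) (LA (LV 0) (LV 1)) | _ => LZ end.
Definition gTs : serL := fun k => match k with 1%nat => LS (-(1/2)) (LV 0) | _ => LZ end.
Definition Kk : serL := bchL (bchL Zr gHs) gTs.
Definition Rr : serL := bchL (bchL Zr gTs) gHs.
Definition Mdb : serL := fun k => match k with 1%nat => LV 2 | 3%nat => LV 3 | _ => LZ end.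
Definition DeltaDB : LT := LA (LS (-1/8) (LB (LV 2) (LB (LV 1) (LV 0))))
  (LA (LS (-1/12) (LB (LV 1) (LB (LV 1) (LV 0)))) (LS (1/24) (LB (LV 0) (LB (LV 0) (LV 1))))).
Definition RtDB : serL := fun k => match k with 1%nat => LA (LV 1) (LV 2) | 3%nat => LA (LV 3) DeltaDB | _ => LZ end.
Definition relDB (i j : nat) : bool := orb (andb (Nat.eqb i 1) (Nat.eqb j 2)) (andb (Nat.eqb i 2) (Nat.eqb j 1)).

Definition Nbd : serL := fun k => match k with 1%nat => LA (LA (LV 0) (LV 2)) (LV 3) | 3%nat => LV 4 | _ => LZ end.
Definition DeltaBD : LT := LS (-1/24) (LB (LV 1) (LB (LV 0) (LV 3))).
Definition RtBD : serL := fun k => match k with 1%nat => LA (LA (LA (LV 0) (LV 2)) (LV 3)) (LV 1) | 3%nat => LA (LV 4) DeltaBD | _ => LZ end.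
Definition relBD (i j : nat) : bool :=
  orb (orb (orb (andb (Nat.eqb i 0) (Nat.eqb j 2)) (andb (Nat.eqb i 2) (Nat.eqb j 0)))
           (orb (andb (Nat.eqb i 1) (Nat.eqb j 2)) (andb (Nat.eqb i 2) (Nat.eqb j 1))))
      (orb (andb (Nat.eqb i 1) (Nat.eqb j 3)) (andb (Nat.eqb i 3) (Nat.eqb j 1))).

Definition gTh : serL := fun k => match k with 1%nat => LS (1/2) (LV 0) | _ => LZ end.
Definition Mf : serL := fun k => match k with 1%nat => LV 1 | 3%nat => LV 2 | _ => LZ end.
Definition RtF : serL := fun k => match k with 1%nat => LA (LV 0) (LV 1)
  | 3%nat => LA (LV 2) (LA (LS (1/12) (LB (LV 1) (LB (LV 1) (LV 0)))) (LS (-1/24) (LB (LV 0) (LB (LV 0) (LV 1)))))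
  | _ => LZ end.

Lemma stepDB_L N rho : (forall n, Smooth N (rho n)) ->
  (forall i j, relDB i j = true -> eqU N (opbr N (rho i) (rho j)) zeroF) ->
  SE N (iS N rho (bchL (bchL Rr Mdb) Kk)) (iS N rho RtDB).
Proof.
  intros Hsm Hrel k Hk. destruct k as [|[|[|[|[|k]]]]]; try lia.
  - intros x p HU. unfold iS.
    rewrite (expand_pt N rho relDB Hsm Hrel _ x p HU), (expand_pt N rho relDB Hsm Hrel _ x p HU).
    cbn [expand brc canon mon_eqb mkey lexb flat_map map app fst snd sumLv fold_right Nat.eqb Nat.ltb Nat.leb andb orb negb jacLT Lm bchL addSL scaleSL brSL iS Rr Kk Mdb RtDB DeltaDB gHs gTs Zr relDB] in *.
    lra.
  - intros x p HU. unfold iS.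
    rewrite (expand_pt N rho relDB Hsm Hrel _ x p HU), (expand_pt N rho relDB Hsm Hrel _ x p HU).
    cbn [expand brc canon mon_eqb mkey lexb flat_map map app fst snd sumLv fold_right Nat.eqb Nat.ltb Nat.leb andb orb negb jacLT Lm bchL addSL scaleSL brSL iS Rr Kk Mdb RtDB DeltaDB gHs gTs Zr relDB] in *.
    lra.
  - intros x p HU. unfold iS.
    rewrite (expand_pt N rho relDB Hsm Hrel _ x p HU), (expand_pt N rho relDB Hsm Hrel _ x p HU).
    cbn [expand brc canon mon_eqb mkey lexb flat_map map app fst snd sumLv fold_right Nat.eqb Nat.ltb Nat.leb andb orb negb jacLT Lm bchL addSL scaleSL brSL iS Rr Kk Mdb RtDB DeltaDB gHs gTs Zr relDB] in *.
    lra.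
  - intros x p HU. unfold iS.
    rewrite (expand_pt N rho relDB Hsm Hrel _ x p HU), (expand_pt N rho relDB Hsm Hrel _ x p HU).
    pose proof (jac_inst N rho relDB Hsm Hrel (MV 0) (MV 1) (MB (MV 0) (MV 1)) x p HU).
    pose proof (jac_inst N rho relDB Hsm Hrel (MV 1) (MV 2) (MB (MV 0) (MV 1)) x p HU).
    cbn [expand brc canon mon_eqb mkey lexb flat_map map app fst snd sumLv fold_right Nat.eqb Nat.ltb Nat.leb andb orb negb jacLT Lm bchL addSL scaleSL brSL iS Rr Kk Mdb RtDB DeltaDB gHs gTs Zr relDB] in *.
    lra.
Qed.

Lemma stepBD_L N rho : (forall n, Smooth N (rho n)) ->
  (forall i j, relBD i j = true -> eqU N (opbr N (rho i) (rho j)) zeroF) ->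
  SE N (iS N rho (bchL (bchL Kk Nbd) Rr)) (iS N rho RtBD).
Proof.
  intros Hsm Hrel k Hk. destruct k as [|[|[|[|[|k]]]]]; try lia.
  - intros x p HU. unfold iS.
    rewrite (expand_pt N rho relBD Hsm Hrel _ x p HU), (expand_pt N rho relBD Hsm Hrel _ x p HU).
    cbn [expand brc canon mon_eqb mkey lexb flat_map map app fst snd sumLv fold_right Nat.eqb Nat.ltb Nat.leb andb orb negb jacLT Lm bchL addSL scaleSL brSL iS Rr Kk Nbd RtBD DeltaBD gHs gTs Zr relBD] in *.
    lra.
  - intros x p HU. unfold iS.
    rewrite (expand_pt N rho relBD Hsm Hrel _ x p HU), (expand_pt N rho relBD Hsm Hrel _ x p HU).
    cbn [expand brc canon mon_eqb mkey lexb flat_map map app fst snd sumLv fold_right Nat.eqb Nat.ltb Nat.leb andb orb negb jacLT Lm bchL addSL scaleSL brSL iS Rr Kk Nbd RtBD DeltaBD gHs gTs Zr relBD] in *.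
    lra.
  - intros x p HU. unfold iS.
    rewrite (expand_pt N rho relBD Hsm Hrel _ x p HU), (expand_pt N rho relBD Hsm Hrel _ x p HU).
    pose proof (jac_inst N rho relBD Hsm Hrel (MV 0) (MV 1) (MV 2) x p HU).
    pose proof (jac_inst N rho relBD Hsm Hrel (MV 0) (MV 1) (MV 3) x p HU).
    cbn [expand brc canon mon_eqb mkey lexb flat_map map app fst snd sumLv fold_right Nat.eqb Nat.ltb Nat.leb andb orb negb jacLT Lm bchL addSL scaleSL brSL iS Rr Kk Nbd RtBD DeltaBD gHs gTs Zr relBD] in *.
    lra.
  - intros x p HU. unfold iS.
    rewrite (expand_pt N rho relBD Hsm Hrel _ x p HU), (expand_pt N rho relBD Hsm Hrel _ x p HU).
    pose proof (jac_inst N rho relBD Hsm Hrel (MV 1) (MV 2) (MB (MV 0) (MV 1)) x p HU).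
    pose proof (jac_inst N rho relBD Hsm Hrel (MV 1) (MV 3) (MB (MV 0) (MV 1)) x p HU).
    pose proof (jac_inst N rho relBD Hsm Hrel (MV 0) (MV 1) (MB (MV 0) (MV 1)) x p HU).
    cbn [expand brc canon mon_eqb mkey lexb flat_map map app fst snd sumLv fold_right Nat.eqb Nat.ltb Nat.leb andb orb negb jacLT Lm bchL addSL scaleSL brSL iS Rr Kk Nbd RtBD DeltaBD gHs gTs Zr relBD] in *.
    lra.
Qed.

Lemma finDB_L N rho : (forall n, Smooth N (rho n)) ->
  (forall i j, relF i j = true -> eqU N (opbr N (rho i) (rho j)) zeroF) ->
  SE N (iS N rho (bchL (bchL gTh Mf) gTh)) (iS N rho RtF).
Proof.
  intros Hsm Hrel k Hk. destruct k as [|[|[|[|[|k]]]]]; try lia.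
  - intros x p HU. unfold iS.
    rewrite (expand_pt N rho relF Hsm Hrel _ x p HU), (expand_pt N rho relF Hsm Hrel _ x p HU).
    cbn [expand brc canon mon_eqb mkey lexb flat_map map app fst snd sumLv fold_right Nat.eqb Nat.ltb Nat.leb andb orb negb jacLT Lm bchL addSL scaleSL brSL iS gTh Mf RtF relF] in *.
    lra.
  - intros x p HU. unfold iS.
    rewrite (expand_pt N rho relF Hsm Hrel _ x p HU), (expand_pt N rho relF Hsm Hrel _ x p HU).
    cbn [expand brc canon mon_eqb mkey lexb flat_map map app fst snd sumLv fold_right Nat.eqb Nat.ltb Nat.leb andb orb negb jacLT Lm bchL addSL scaleSL brSL iS gTh Mf RtF relF] in *.
    lra.
  - intros x p HU. unfold iS.
    rewrite (expand_pt N rho relF Hsm Hrel _ x p HU), (expand_pt N rho relF Hsm Hrel _ x p HU).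
    cbn [expand brc canon mon_eqb mkey lexb flat_map map app fst snd sumLv fold_right Nat.eqb Nat.ltb Nat.leb andb orb negb jacLT Lm bchL addSL scaleSL brSL iS gTh Mf RtF relF] in *.
    lra.
  - intros x p HU. unfold iS.
    rewrite (expand_pt N rho relF Hsm Hrel _ x p HU), (expand_pt N rho relF Hsm Hrel _ x p HU).
    pose proof (jac_inst N rho relF Hsm Hrel (MV 0) (MV 1) (MB (MV 0) (MV 1)) x p HU).
    cbn [expand brc canon mon_eqb mkey lexb flat_map map app fst snd sumLv fold_right Nat.eqb Nat.ltb Nat.leb andb orb negb jacLT Lm bchL addSL scaleSL brSL iS gTh Mf RtF relF] in *.
    lra.
Qed.

Definition lsum {A : Type} (l : list A) (f : A -> R) : R := fold_right (fun a acc => f a + acc) 0 l.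
Lemma lsum_app {A} (l1 l2 : list A) f : lsum (l1 ++ l2) f = lsum l1 f + lsum l2 f.
Proof. induction l1; simpl; [ring|]. rewrite IHl1. ring. Qed.
Lemma lsum_perm {A} (l1 l2 : list A) f : Permutation l1 l2 -> lsum l1 f = lsum l2 f.
Proof. induction 1; simpl; try ring; auto. rewrite IHPermutation. reflexivity. lra. Qed.
Lemma lsum_ext {A} (l : list A) f g : (forall a, In a l -> f a = g a) -> lsum l f = lsum l g.
Proof. induction l; simpl; intros H; [reflexivity|]. rewrite H, IHl; auto. Qed.
Lemma lsum_plus {A} (l : list A) f g : lsum l (fun a => f a + g a) = lsum l f + lsum l g.
Proof. induction l; simpl; [ring|]. rewrite IHl. ring. Qed.
Lemma lsum_scal {A} (l : list A) c f : lsum l (fun a => c * f a) = c * lsum l f.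
Proof. induction l; simpl; [ring|]. rewrite IHl. ring. Qed.

Definition xonly (f : Fun) := forall x p q, f x p = f x q.
Definition ponly (f : Fun) := forall x y p, f x p = f y p.

Lemma Derive_cst_fun (f : R -> R) c t0 : (forall t, f t = c) -> Derive f t0 = 0.
Proof. intros H. rewrite (Derive_ext f (fun _ => c)) by auto. apply Derive_const. Qed.

Lemma dP_xonly f k a x p : xonly f -> dP f k a x p = 0.
Proof. intros H. unfold dP. apply (Derive_cst_fun _ (f x p)). intros t. apply H. Qed.
Lemma dX_ponly f k a x p : ponly f -> dX f k a x p = 0.
Proof. intros H. unfold dX. apply (Derive_cst_fun _ (f x p)). intros t. apply H. Qed.

Lemma opbr_xx N f g x p : xonly f -> xonly g -> opbr N f g x p = 0.
Proof. intros Hf Hg. unfold opbr, poisson. apply sumR_zero; intros; apply sumR_zero; intros.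
  rewrite !dP_xonly by auto. ring. Qed.
Lemma opbr_pp N f g x p : ponly f -> ponly g -> opbr N f g x p = 0.
Proof. intros Hf Hg. unfold opbr, poisson. apply sumR_zero; intros; apply sumR_zero; intros.
  rewrite !dX_ponly by auto. ring. Qed.

Definition indepX (f : Fun) k := forall x p a t, f (upd x k a t) p = f x p.
Definition indepP (f : Fun) k := forall x p a t, f x (upd p k a t) = f x p.
Lemma dX_indep f k a x p : indepX f k -> dX f k a x p = 0.
Proof. intros H. unfold dX. apply (Derive_cst_fun _ (f x p)). intros t. apply H. Qed.
Lemma dP_indep f k a x p : indepP f k -> dP f k a x p = 0.
Proof. intros H. unfold dP. apply (Derive_cst_fun _ (f x p)). intros t. apply H. Qed.

Lemma opbr_zero_gen N f g x p : xonly g -> (forall k, indepP f k \/ indepX g k) -> opbr N f g x p = 0.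
Proof.
  intros Hg Hk. unfold opbr, poisson. apply sumR_zero; intros k _; apply sumR_zero; intros a _.
  rewrite (dP_xonly g) by auto. destruct (Hk k) as [H|H].
  - rewrite (dP_indep f) by auto. ring.
  - rewrite (dX_indep g) by auto. ring.
Qed.

Lemma upd_other (x : Coord) k a t i b : i <> k -> upd x k a t i b = x i b.
Proof. intros H. unfold upd. destruct (Nat.eqb_spec i k); [lia|reflexivity]. Qed.

Section Prob.
Variables (N : nat) (G : R) (m : nat -> R).

Definition Tb (b : nat * nat) : Fun := addF (Ti m (fst b)) (Ti m (snd b)).
Definition Vb (b : nat * nat) : Fun := Vij G m (fst b) (snd b).
Definition Trest (b : nat * nat) : Fun := fun x p => Tkin N m x p - Ti m (fst b) x p - Ti m (snd b) x p.
Definition VsumF (l : list (nat * nat)) : Fun := fun x p => lsum l (fun a => Vb a x p).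
Definition validP (b : nat * nat) := (fst b < N)%nat /\ (snd b < N)%nat /\ fst b <> snd b.

Lemma sm_Ti i : Smooth N (Ti m i).
Proof.
  exists (EMul (Cst (/ (2 * m i))) (sumE 3 (fun a => EMul (Pc i a) (Pc i a)))).
  split. { split; [exact I|]. apply wf_sumE; intros; split; exact I. }
  intros x p _. cbn [ev]. rewrite ev_sumE. unfold Ti, sumR; simpl. unfold Rdiv. ring.
Qed.
Lemma sm_Vij i j : (i < N)%nat -> (j < N)%nat -> i <> j -> Smooth N (Vij G m i j).
Proof.
  intros Hi Hj Hij. exists (EMul (Cst (- G * m i * m j)) (Qc i j)). split; [simpl; auto|].
  intros x p _. simpl. unfold Vij, r2. unfold Rdiv. ring.
Qed.
Lemma sm_Tb b : Smooth N (Tb b). Proof. apply sm_add; apply sm_Ti. Qed.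
Lemma sm_Vb b : validP b -> Smooth N (Vb b). Proof. intros [? [? ?]]; apply sm_Vij; auto. Qed.
Lemma sm_Tkin : Smooth N (Tkin N m).
Proof. apply (sm_sumR N N (fun i => Ti m i)). intros; apply sm_Ti. Qed.
Lemma sm_Trest b : Smooth N (Trest b).
Proof.
  apply (sm_ext2 N _ (addF (Tkin N m) (scaleF (-1) (Tb b)))).
  - intros x p. unfold Trest, addF, scaleF, Tb, addF. ring.
  - apply sm_add; [apply sm_Tkin| apply sm_scale, sm_Tb].
Qed.
Lemma sm_VsumF l : List.Forall validP l -> Smooth N (VsumF l).
Proof.
  induction l as [|b l IH]; intros H.
  - apply (sm_ext2 N _ zeroF); [intros; reflexivity| apply sm_zero].
  - inversion H; subst. apply (sm_ext2 N _ (addF (Vb b) (VsumF l))); [intros; reflexivity|].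
    apply sm_add; [apply sm_Vb; auto| apply IH; auto].
Qed.

Lemma xonly_Vb b : xonly (Vb b). Proof. intros x p q. reflexivity. Qed.
Lemma xonly_VsumF l : xonly (VsumF l). Proof. intros x p q. reflexivity. Qed.
Lemma ponly_Ti i : ponly (Ti m i). Proof. intros x y p. reflexivity. Qed.
Lemma ponly_Tb b : ponly (Tb b). Proof. intros x y p. reflexivity. Qed.
Lemma ponly_Tkin : ponly (Tkin N m). Proof. intros x y p. reflexivity. Qed.
Lemma ponly_Trest b : ponly (Trest b). Proof. intros x y p. reflexivity. Qed.

Lemma Ti_upd_other i k a t p x : i <> k -> Ti m i x (upd p k a t) = Ti m i x p.
Proof. intros H. unfold Ti. f_equal. apply sumR_ext; intros. rewrite upd_other; auto. Qed.

Lemma Tkin_upd k a t x p : (k < N)%nat ->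
  Tkin N m x (upd p k a t) - Ti m k x (upd p k a t) = Tkin N m x p - Ti m k x p.
Proof.
  intros Hk. unfold Tkin. clear - Hk. induction N as [|n IH]; [lia|].
  rewrite !sumR_S. destruct (Nat.eq_dec n k) as [->|Hn].
  - assert (E : sumR k (fun i => Ti m i x (upd p k a t)) = sumR k (fun i => Ti m i x p)).
    { apply sumR_ext; intros. apply Ti_upd_other. lia. }
    rewrite E. ring.
  - rewrite (Ti_upd_other n) by auto. assert (k < n)%nat by lia. specialize (IH H). lra.
Qed.

Lemma indepX_Vb b k : k <> fst b -> k <> snd b -> indepX (Vb b) k.
Proof. intros H1 H2 x p a t. unfold Vb, Vij. f_equal. f_equal. apply sumR_ext; intros.
  rewrite !upd_other; auto. Qed.
Lemma indepP_Ti i k : k <> i -> indepP (Ti m i) k.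
Proof. intros H x p a t. apply Ti_upd_other; auto. Qed.
Lemma indepP_Trest b k : validP b -> (k = fst b \/ k = snd b) -> indepP (Trest b) k.
Proof.
  intros [Hi [Hj Hij]] Hk x p a t. unfold Trest.
  destruct Hk as [ -> | -> ].
  - rewrite (Ti_upd_other (snd b)) by auto. pose proof (Tkin_upd (fst b) a t x p Hi). lra.
  - rewrite (Ti_upd_other (fst b)) by auto. pose proof (Tkin_upd (snd b) a t x p Hj). lra.
Qed.

Lemma rel_Trest_Vb b x p : validP b -> opbr N (Trest b) (Vb b) x p = 0.
Proof.
  intros Hb. apply opbr_zero_gen; [apply xonly_Vb|]. intros k.
  destruct (Nat.eq_dec k (fst b)) as [E|E]; [left; apply indepP_Trest; auto|].
  destruct (Nat.eq_dec k (snd b)) as [E2|E2]; [left; apply indepP_Trest; auto|].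
  right. apply indepX_Vb; auto.
Qed.
Lemma rel_Ti_Vb i b x p : i <> fst b -> i <> snd b -> opbr N (Ti m i) (Vb b) x p = 0.
Proof.
  intros H1 H2. apply opbr_zero_gen; [apply xonly_Vb|]. intros k.
  destruct (Nat.eq_dec k i) as [->|E]; [right; apply indepX_Vb; auto| left; apply indepP_Ti; auto].
Qed.
End Prob.

Definition ser3 (A C : Fun) : Ser := fun k => match k with 1%nat => A | 3%nat => C | _ => zeroF end.

Lemma ser3_cong N A A' C C' : eqU N A A' -> eqU N C C' -> SE N (ser3 A C) (ser3 A' C').
Proof. intros HA HC k Hk. destruct k as [|[|[|[|[|k]]]]]; try lia; simpl; auto using eqU_refl. Qed.

Section Steps.
Variables (N : nat) (G : R) (m : nat -> R).

Definition rhoDB (b : nat * nat) (Vs M3 : Fun) : nat -> Fun := fun n =>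
  match n with 0%nat => Tb m b | 1%nat => Vb G m b | 2%nat => Vs | 3%nat => M3 | _ => zeroF end.
Definition DeltaDBf (b : nat * nat) (Vs : Fun) : Fun := interp N (rhoDB b Vs zeroF) DeltaDB.

Lemma GenOK_kick b : validP N b -> List.Forall (GenOK N) (kick G m (1/2) b).
Proof.
  intros Hb. unfold kick. constructor; [|constructor; [|constructor]].
  - exists (1/2), (Hij G m (fst b) (snd b)). split; auto. apply sm_add; [apply sm_Tb| apply sm_Vb; auto].
  - exists (-(1/2)), (addF (Ti m (fst b)) (Ti m (snd b))). split; auto. apply sm_Tb.
Qed.
Lemma GenOK_rkick b : validP N b -> List.Forall (GenOK N) (rev (kick G m (1/2) b)).
Proof. intros Hb. apply Forall_rev. apply GenOK_kick; auto. Qed.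
Lemma GenOK_psiW l : List.Forall (validP N) l -> List.Forall (GenOK N) (psiW G m (1/2) l).
Proof.
  induction l as [|b l IH]; intros H; unfold psiW in *; cbn [flat_map]; [constructor|].
  inversion H; subst. apply List.Forall_app; split; [apply GenOK_kick| apply IH]; auto.
Qed.

Lemma rk_SE b rho : rho 0%nat = Tb m b -> rho 1%nat = Vb G m b ->
  SE N (Lg N (rev (kick G m (1/2) b))) (iS N rho Rr).
Proof.
  intros H0 H1. unfold Lg, Rr. simpl.
  apply bch_L'; [apply bch_L'|].
  - intros k Hk x p HU. reflexivity.
  - intros k Hk x p HU. destruct k as [|[|[|[|[|k]]]]]; try lia; unfold iS, gen; simpl; rewrite ?H0, ?H1; unfold Tb, Vb, Hij; reflexivity.
  - intros k Hk x p HU. destruct k as [|[|[|[|[|k]]]]]; try lia; unfold iS, gen; simpl; rewrite ?H0, ?H1; unfold Tb, Vb, Hij; reflexivity.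
Qed.
Lemma k_SE b rho : rho 0%nat = Tb m b -> rho 1%nat = Vb G m b ->
  SE N (Lg N (kick G m (1/2) b)) (iS N rho Kk).
Proof.
  intros H0 H1. unfold Lg, Kk. simpl.
  apply bch_L'; [apply bch_L'|].
  - intros k Hk x p HU. reflexivity.
  - intros k Hk x p HU. destruct k as [|[|[|[|[|k]]]]]; try lia; unfold iS, gen; simpl; rewrite ?H0, ?H1; unfold Tb, Vb, Hij; reflexivity.
  - intros k Hk x p HU. destruct k as [|[|[|[|[|k]]]]]; try lia; unfold iS, gen; simpl; rewrite ?H0, ?H1; unfold Tb, Vb, Hij; reflexivity.
Qed.

Lemma stepDB_F b Mser Vs M3 : validP N b -> Smooth N Vs -> xonly Vs -> Smooth N M3 ->
  SE N Mser (ser3 Vs M3) ->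
  SE N (bch N (bch N (Lg N (rev (kick G m (1/2) b))) Mser) (Lg N (kick G m (1/2) b)))
       (ser3 (addF (Vb G m b) Vs) (addF M3 (DeltaDBf b Vs))).
Proof.
  intros Hb HVs HxVs HM3 HM.
  set (rho := rhoDB b Vs M3).
  assert (Hsm : forall n, Smooth N (rho n)).
  { intros n. unfold rho, rhoDB. destruct n as [|[|[|[|n]]]]; auto using sm_Tb, sm_Vb, sm_zero. }
  assert (Hrel : forall i j, relDB i j = true -> eqU N (opbr N (rho i) (rho j)) zeroF).
  { intros i j Hij x p _. unfold relDB in Hij.
    destruct i as [|[|[|i]]]; destruct j as [|[|[|j]]]; simpl in Hij; try discriminate;
    unfold rho, rhoDB; apply opbr_xx; auto using xonly_Vb. }
  eapply SE_trans.
  { apply (bch_L' N rho _ _ (bchL Rr Mdb) Kk); [apply (bch_L' N rho _ _ Rr Mdb)|].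
    - apply (rk_SE b rho); reflexivity.
    - eapply SE_trans; [exact HM|]. intros k Hk x p HU. destruct k as [|[|[|[|[|k]]]]]; try lia; reflexivity.
    - apply (k_SE b rho); reflexivity. }
  eapply SE_trans; [apply stepDB_L; auto|].
  intros k Hk x p HU. destruct k as [|[|[|[|[|k]]]]]; try lia; reflexivity.
Qed.

Definition rhoBD (b : nat * nat) (Vs N3 : Fun) : nat -> Fun := fun n =>
  match n with 0%nat => Tb m b | 1%nat => Vb G m b | 2%nat => Trest N m b | 3%nat => Vs | 4%nat => N3 | _ => zeroF end.
Definition DeltaBDf (b : nat * nat) (Vs : Fun) : Fun := interp N (rhoBD b Vs zeroF) DeltaBD.

Lemma stepBD_F b Nser Vs N3 : validP N b -> Smooth N Vs -> xonly Vs -> Smooth N N3 ->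
  SE N Nser (ser3 (addF (Tkin N m) Vs) N3) ->
  SE N (bch N (bch N (Lg N (kick G m (1/2) b)) Nser) (Lg N (rev (kick G m (1/2) b))))
       (ser3 (addF (Tkin N m) (addF Vs (Vb G m b))) (addF N3 (DeltaBDf b Vs))).
Proof.
  intros Hb HVs HxVs HN3 HNs.
  set (rho := rhoBD b Vs N3).
  assert (Hsm : forall n, Smooth N (rho n)).
  { intros n. unfold rho, rhoBD. destruct n as [|[|[|[|[|n]]]]]; auto using sm_Tb, sm_Vb, sm_zero, sm_Trest. }
  assert (Hrel : forall i j, relBD i j = true -> eqU N (opbr N (rho i) (rho j)) zeroF).
  { intros i j Hij x p _. unfold relBD in Hij.
    destruct i as [|[|[|[|i]]]]; destruct j as [|[|[|[|j]]]]; simpl in Hij; try discriminate;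
    unfold rho, rhoBD.
    - apply opbr_pp; auto using ponly_Tb, ponly_Trest.
    - unfold opbr. rewrite poisson_anti. fold (opbr N (Trest N m b) (Vb G m b)).
      rewrite rel_Trest_Vb; auto. unfold zeroF; ring.
    - apply opbr_xx; auto using xonly_Vb.
    - apply opbr_pp; auto using ponly_Tb, ponly_Trest.
    - apply rel_Trest_Vb; auto.
    - apply opbr_xx; auto using xonly_Vb. }
  eapply SE_trans.
  { apply (bch_L' N rho _ _ (bchL Kk Nbd) Rr); [apply (bch_L' N rho _ _ Kk Nbd)|].
    - apply (k_SE b rho); reflexivity.
    - eapply SE_trans; [exact HNs|]. intros k Hk x p HU. destruct k as [|[|[|[|[|k]]]]]; try lia; try reflexivity.
      unfold iS; simpl. unfold rho, rhoBD, addF, Trest, Tb, addF. ring.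
    - apply (rk_SE b rho); reflexivity. }
  eapply SE_trans; [apply stepBD_L; auto|].
  intros k Hk x p HU. destruct k as [|[|[|[|[|k]]]]]; try lia; try reflexivity.
  unfold iS; simpl. unfold rho, rhoBD, addF, Trest, Tb, addF. ring.
Qed.
End Steps.

Section Ind.
Variables (N : nat) (G : R) (m : nat -> R).

Definition mDB l := rev (psiW G m (1/2) l) ++ psiW G m (1/2) l.
Fixpoint M3r (lr : list (nat * nat)) : Fun :=
  match lr with [] => zeroF | b :: lr' => addF (M3r lr') (DeltaDBf N G m b (VsumF G m (rev lr'))) end.
Definition M3DB l := M3r (rev l).

Lemma psiW_app l1 l2 : psiW G m (1/2) (l1 ++ l2) = psiW G m (1/2) l1 ++ psiW G m (1/2) l2.
Proof. unfold psiW. apply flat_map_app. Qed.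
Lemma psiW_single b : psiW G m (1/2) [b] = kick G m (1/2) b.
Proof. unfold psiW. cbn [flat_map]. apply app_nil_r. Qed.

Lemma GenOK_mDB l : List.Forall (validP N) l -> List.Forall (GenOK N) (mDB l).
Proof. intros H. unfold mDB. apply List.Forall_app; split; [apply Forall_rev|]; apply GenOK_psiW; auto. Qed.

Lemma xonly_eqU_smooth_VsumF l : List.Forall (validP N) l -> Smooth N (VsumF G m l).
Proof. apply sm_VsumF. Qed.

Lemma sm_DeltaDBf b Vs : validP N b -> Smooth N Vs -> Smooth N (DeltaDBf N G m b Vs).
Proof. intros Hb HV. unfold DeltaDBf. apply sm_interp. intros n. destruct n as [|[|[|[|n]]]]; simpl;
  auto using sm_Tb, sm_Vb, sm_zero. Qed.
Lemma sm_DeltaBDf b Vs : validP N b -> Smooth N Vs -> Smooth N (DeltaBDf N G m b Vs).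
Proof. intros Hb HV. unfold DeltaBDf. apply sm_interp. intros n. destruct n as [|[|[|[|[|n]]]]]; simpl;
  auto using sm_Tb, sm_Vb, sm_zero, sm_Trest. Qed.

Lemma DB_ind l : List.Forall (validP N) l ->
  SE N (Lg N (mDB l)) (ser3 (VsumF G m l) (M3DB l)) /\ Smooth N (M3DB l).
Proof.
  induction l as [|b l IH] using rev_ind; intros Hl.
  - split; [|apply sm_zero]. unfold mDB, Lg. simpl. intros k Hk x p HU.
    destruct k as [|[|[|[|[|k]]]]]; try lia; reflexivity.
  - apply List.Forall_app in Hl. destruct Hl as [Hl Hb]. inversion Hb as [|? ? Hb' _]; subst.
    destruct (IH Hl) as [IH1 IH2].
    assert (Ee : mDB (l ++ [b]) = (rev (kick G m (1/2) b) ++ mDB l) ++ kick G m (1/2) b).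
    { unfold mDB. rewrite psiW_app, psiW_single, rev_app_distr. rewrite !app_assoc. reflexivity. }
    assert (HM3 : M3DB (l ++ [b]) = addF (M3DB l) (DeltaDBf N G m b (VsumF G m l))).
    { unfold M3DB. rewrite rev_app_distr. simpl. rewrite rev_involutive. reflexivity. }
    split.
    + rewrite Ee.
      eapply SE_trans; [apply Lg_app|].
      { apply List.Forall_app; split; [apply GenOK_rkick; auto| apply GenOK_mDB; auto]. }
      { apply GenOK_kick; auto. }
      eapply SE_trans; [apply bch_cong; [apply Lg_app| apply SE_refl]|].
      { apply GenOK_rkick; auto. } { apply GenOK_mDB; auto. }
      eapply SE_trans; [apply (stepDB_F N G m b (Lg N (mDB l)) (VsumF G m l) (M3DB l)); auto;
        [apply sm_VsumF; auto| apply xonly_VsumF]|].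
      rewrite HM3. apply ser3_cong; [|apply eqU_refl].
      intros x p _. unfold addF, VsumF. rewrite lsum_app. simpl. ring.
    + rewrite HM3. apply sm_add; auto. apply sm_DeltaDBf; auto. apply sm_VsumF; auto.
Qed.

Definition mBD l := psiW G m (1/2) l ++ [gen 1 (Tkin N m)] ++ rev (psiW G m (1/2) l).
Fixpoint N3BD (l : list (nat * nat)) : Fun :=
  match l with [] => zeroF | b :: l' => addF (N3BD l') (DeltaBDf N G m b (VsumF G m l')) end.

Lemma GenOK_mBD l : List.Forall (validP N) l -> List.Forall (GenOK N) (mBD l).
Proof.
  intros H. unfold mBD. apply List.Forall_app; split; [apply GenOK_psiW; auto|].
  apply List.Forall_app; split; [|apply Forall_rev; apply GenOK_psiW; auto].
  constructor; [|constructor]. exists 1, (Tkin N m). split; auto. apply sm_Tkin.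
Qed.

Lemma BD_ind l : List.Forall (validP N) l ->
  SE N (Lg N (mBD l)) (ser3 (addF (Tkin N m) (VsumF G m l)) (N3BD l)) /\ Smooth N (N3BD l).
Proof.
  induction l as [|b l IH]; intros Hl.
  - split; [|apply sm_zero]. unfold mBD, Lg. simpl.
    eapply SE_trans; [apply bch_zero_l; apply SmS_gen, sm_Tkin|].
    intros k Hk x p HU. destruct k as [|[|[|[|[|k]]]]]; try lia; try reflexivity.
    unfold gen, scaleF, addF, VsumF. simpl. ring.
  - inversion Hl as [|? ? Hb Hl']; subst.
    destruct (IH Hl') as [IH1 IH2].
    assert (Ee : mBD (b :: l) = (kick G m (1/2) b ++ mBD l) ++ rev (kick G m (1/2) b)).
    { unfold mBD. replace (b :: l) with ([b] ++ l) by reflexivity.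
      rewrite psiW_app, psiW_single, rev_app_distr. rewrite !app_assoc. reflexivity. }
    split.
    + rewrite Ee.
      eapply SE_trans; [apply Lg_app|].
      { apply List.Forall_app; split; [apply GenOK_kick; auto| apply GenOK_mBD; auto]. }
      { apply GenOK_rkick; auto. }
      eapply SE_trans; [apply bch_cong; [apply Lg_app| apply SE_refl]|].
      { apply GenOK_kick; auto. } { apply GenOK_mBD; auto. }
      eapply SE_trans; [apply (stepBD_F N G m b (Lg N (mBD l)) (VsumF G m l) (N3BD l)); auto;
        [apply sm_VsumF; auto| apply xonly_VsumF]|].
      simpl. apply ser3_cong; [|apply eqU_refl].
      intros x p _. unfold addF, VsumF. simpl. ring.
    + simpl. apply sm_add; auto. apply sm_DeltaBDf; auto. apply sm_VsumF; auto.
Qed.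
End Ind.

Definition relE3 (i j : nat) : bool := (orb (orb (orb (andb (Nat.eqb i 0) (Nat.eqb j 1)) (andb (Nat.eqb i 1) (Nat.eqb j 0))) (andb (Nat.eqb i 1) (Nat.eqb j 2))) (andb (Nat.eqb i 2) (Nat.eqb j 1))).
Definition relE4 (i j : nat) : bool := (orb (andb (Nat.eqb i 0) (Nat.eqb j 1)) (andb (Nat.eqb i 1) (Nat.eqb j 0))).
Definition relE5 (i j : nat) : bool := (orb (orb (orb (orb (orb (orb (orb (andb (Nat.eqb i 0) (Nat.eqb j 1)) (andb (Nat.eqb i 1) (Nat.eqb j 0))) (andb (Nat.eqb i 0) (Nat.eqb j 2))) (andb (Nat.eqb i 2) (Nat.eqb j 0))) (andb (Nat.eqb i 0) (Nat.eqb j 3))) (andb (Nat.eqb i 3) (Nat.eqb j 0))) (andb (Nat.eqb i 1) (Nat.eqb j 4))) (andb (Nat.eqb i 4) (Nat.eqb j 1))).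
Definition relE6 (i j : nat) : bool := (orb (orb (orb (andb (Nat.eqb i 0) (Nat.eqb j 2)) (andb (Nat.eqb i 2) (Nat.eqb j 0))) (andb (Nat.eqb i 0) (Nat.eqb j 3))) (andb (Nat.eqb i 3) (Nat.eqb j 0))).
Lemma idE3 N rho : (forall n, Smooth N (rho n)) ->
  (forall i j, relE3 i j = true -> eqU N (opbr N (rho i) (rho j)) zeroF) ->
  forall x p, noCollision N x -> interp N rho (LB (LA (LV 0) (LV 1)) (LB (LA (LV 0) (LV 1)) (LV 2))) x p = interp N rho (LB (LV 0) (LB (LV 0) (LV 2))) x p.
Proof.
  intros Hsm Hrel x p HU.
  rewrite (expand_pt N rho relE3 Hsm Hrel _ x p HU), (expand_pt N rho relE3 Hsm Hrel _ x p HU).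
  pose proof (jac_inst N rho relE3 Hsm Hrel (MV 0) (MV 1) (MV 2) x p HU).
  cbn [expand brc canon mon_eqb mkey lexb flat_map map app fst snd sumLv fold_right Nat.eqb Nat.ltb Nat.leb andb orb negb jacLT Lm bchL addSL scaleSL brSL iS relE3] in *.
  lra.
Qed.

Lemma idE4 N rho : (forall n, Smooth N (rho n)) ->
  (forall i j, relE4 i j = true -> eqU N (opbr N (rho i) (rho j)) zeroF) ->
  forall x p, noCollision N x -> interp N rho (LB (LV 0) (LB (LV 1) (LV 2))) x p = interp N rho (LB (LV 1) (LB (LV 0) (LV 2))) x p.
Proof.
  intros Hsm Hrel x p HU.
  rewrite (expand_pt N rho relE4 Hsm Hrel _ x p HU), (expand_pt N rho relE4 Hsm Hrel _ x p HU).
  pose proof (jac_inst N rho relE4 Hsm Hrel (MV 0) (MV 1) (MV 2) x p HU).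
  cbn [expand brc canon mon_eqb mkey lexb flat_map map app fst snd sumLv fold_right Nat.eqb Nat.ltb Nat.leb andb orb negb jacLT Lm bchL addSL scaleSL brSL iS relE4] in *.
  lra.
Qed.

Lemma idE5 N rho : (forall n, Smooth N (rho n)) ->
  (forall i j, relE5 i j = true -> eqU N (opbr N (rho i) (rho j)) zeroF) ->
  forall x p, noCollision N x -> interp N rho (LB (LV 0) (LB (LV 1) (LA (LA (LV 2) (LV 3)) (LV 4)))) x p = interp N rho LZ x p.
Proof.
  intros Hsm Hrel x p HU.
  rewrite (expand_pt N rho relE5 Hsm Hrel _ x p HU), (expand_pt N rho relE5 Hsm Hrel _ x p HU).
  pose proof (jac_inst N rho relE5 Hsm Hrel (MV 0) (MV 1) (MV 2) x p HU).
  pose proof (jac_inst N rho relE5 Hsm Hrel (MV 0) (MV 1) (MV 3) x p HU).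
  cbn [expand brc canon mon_eqb mkey lexb flat_map map app fst snd sumLv fold_right Nat.eqb Nat.ltb Nat.leb andb orb negb jacLT Lm bchL addSL scaleSL brSL iS relE5] in *.
  lra.
Qed.

Lemma idE6 N rho : (forall n, Smooth N (rho n)) ->
  (forall i j, relE6 i j = true -> eqU N (opbr N (rho i) (rho j)) zeroF) ->
  forall x p, noCollision N x -> interp N rho (LB (LV 0) (LB (LV 1) (LV 2))) x p = interp N rho (LS (-1) (LB (LV 2) (LB (LV 0) (LA (LV 1) (LV 3))))) x p.
Proof.
  intros Hsm Hrel x p HU.
  rewrite (expand_pt N rho relE6 Hsm Hrel _ x p HU), (expand_pt N rho relE6 Hsm Hrel _ x p HU).
  pose proof (jac_inst N rho relE6 Hsm Hrel (MV 0) (MV 1) (MV 2) x p HU).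
  cbn [expand brc canon mon_eqb mkey lexb flat_map map app fst snd sumLv fold_right Nat.eqb Nat.ltb Nat.leb andb orb negb jacLT Lm bchL addSL scaleSL brSL iS relE6] in *.
  lra.
Qed.

Definition FL {A : Type} (l : list A) (gs : A -> Fun) : Fun := fun x p => lsum l (fun a => gs a x p).

Section Vals.
Variables (N : nat) (G : R) (m : nat -> R).

Lemma sm_FL {A} (l : list A) gs : (forall a, In a l -> Smooth N (gs a)) -> Smooth N (FL l gs).
Proof.
  induction l as [|a l IH]; intros H.
  - apply (sm_ext2 N _ zeroF); [intros; reflexivity| apply sm_zero].
  - apply (sm_ext2 N _ (addF (gs a) (FL l gs))); [intros; reflexivity|].
    apply sm_add; [apply H; left; auto| apply IH; intros; apply H; right; auto].
Qed.

Lemma opbr_FL_l {A} f (l : list A) gs : Smooth N f -> (forall a, In a l -> Smooth N (gs a)) ->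
  eqU N (opbr N (FL l gs) f) (FL l (fun a => opbr N (gs a) f)).
Proof.
  intros Hf. induction l as [|a l IH]; intros H x p HU.
  - unfold opbr, FL. simpl. apply (poisson_zeror N).
  - unfold opbr in *. unfold FL at 2. simpl.
    rewrite (poisson_ext N f f (FL (a :: l) gs) (addF (gs a) (FL l gs))); auto;
      [|apply eqU_refl| intros y q _; reflexivity].
    rewrite poisson_addr; auto; [| apply H; left; auto | apply sm_FL; intros; apply H; right; auto].
    unfold addF. rewrite IH; auto. intros; apply H; right; auto.
Qed.
Lemma opbr_FL_r {A} f (l : list A) gs : Smooth N f -> (forall a, In a l -> Smooth N (gs a)) ->
  eqU N (opbr N f (FL l gs)) (FL l (fun a => opbr N f (gs a))).
Proof.
  intros Hf. induction l as [|a l IH]; intros H x p HU.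
  - unfold opbr, FL. simpl. apply (poisson_zerol N).
  - unfold opbr in *. unfold FL at 2. simpl.
    rewrite (poisson_ext N (FL (a :: l) gs) (addF (gs a) (FL l gs)) f f); auto;
      [|intros y q _; reflexivity| apply eqU_refl].
    rewrite poisson_addl; auto; [| apply H; left; auto | apply sm_FL; intros; apply H; right; auto].
    unfold addF. rewrite IH; auto. intros; apply H; right; auto.
Qed.

Let T := Tkin N m.
Definition wv x p a b := opbr N (Vb G m a) (opbr N (Vb G m b) (Tkin N m)) x p.
Definition tauv x p b := opbr N (Tb m b) (opbr N (Tb m b) (Vb G m b)) x p.

Lemma T_split b : forall x p, Tkin N m x p = addF (Tb m b) (Trest N m b) x p.
Proof. intros. unfold addF, Tb, Trest, addF. ring. Qed.

Lemma rel_Vb_Trest b x p : validP N b -> opbr N (Vb G m b) (Trest N m b) x p = 0.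
Proof. intros Hb. unfold opbr. rewrite poisson_anti. fold (opbr N (Trest N m b) (Vb G m b)).
  rewrite rel_Trest_Vb; auto. ring. Qed.

Lemma V1 b : validP N b -> eqU N (opbr N (Vb G m b) (Tb m b)) (opbr N (Vb G m b) (Tkin N m)).
Proof.
  intros Hb x p HU. unfold opbr.
  rewrite (poisson_ext N (Tkin N m) (addF (Tb m b) (Trest N m b)) (Vb G m b) (Vb G m b)); auto;
    [| intros y q _; apply T_split | apply eqU_refl].
  rewrite poisson_addl; auto using sm_Tb, sm_Trest, sm_Vb. unfold addF.
  fold (opbr N (Vb G m b) (Trest N m b)). rewrite rel_Vb_Trest; auto. ring.
Qed.

Lemma V2 a b x p : validP N b -> noCollision N x ->
  opbr N (Vb G m a) (opbr N (Vb G m b) (Tb m b)) x p = wv x p a b.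
Proof.
  intros Hb HU. unfold wv, opbr at 1 3.
  apply (poisson_ext N _ _ _ _ (V1 b Hb) (eqU_refl N _) x p HU).
Qed.

Lemma V3 b l x p : validP N b -> List.Forall (validP N) l -> noCollision N x ->
  DeltaDBf N G m b (VsumF G m l) x p =
   -1/8 * lsum l (fun a => wv x p a b) + (-1/12 * wv x p b b + 1/24 * tauv x p b).
Proof.
  intros Hb Hl HU. unfold DeltaDBf, DeltaDB. cbn [interp rhoDB]. unfold addF, scaleF.
  unfold tauv. f_equal. f_equal.
  - change (VsumF G m l) with (FL l (Vb G m)).
    rewrite opbr_FL_l; auto.
    + unfold FL. apply lsum_ext; intros a Ha. apply V2; auto.
    + unfold opbr; apply sm_poisson; [apply sm_Tb| apply sm_Vb; auto].
    + intros a Ha. apply sm_Vb. eapply Forall_forall; eauto.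
  - rewrite V2; auto.
Qed.
End Vals.

Lemma opbr_ext N f f' g g' : eqU N f f' -> eqU N g g' -> eqU N (opbr N f g) (opbr N f' g').
Proof. intros; unfold opbr; apply poisson_ext; auto. Qed.

Section Vals2.
Variables (N : nat) (G : R) (m : nat -> R).

Lemma eqU_T b : eqU N (Tkin N m) (addF (Tb m b) (Trest N m b)).
Proof. intros x p _. apply T_split. Qed.

Ltac relcases Hij := simpl in Hij; try discriminate.

Lemma V5 b x p : validP N b -> noCollision N x ->
  opbr N (Tkin N m) (opbr N (Tkin N m) (Vb G m b)) x p = tauv N G m x p b.
Proof.
  intros Hb HU.
  set (rho := fun n => match n with 0%nat => Tb m b | 1%nat => Trest N m b | 2%nat => Vb G m b | _ => zeroF end).
  assert (Hsm : forall n, Smooth N (rho n)).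
  { intros n; destruct n as [|[|[|n]]]; simpl; auto using sm_Tb, sm_Trest, sm_Vb, sm_zero. }
  assert (Hrel : forall i j, relE3 i j = true -> eqU N (opbr N (rho i) (rho j)) zeroF).
  { intros i j Hij y q _. destruct i as [|[|[|i]]]; destruct j as [|[|[|j]]]; relcases Hij; simpl.
    - apply opbr_pp; auto using ponly_Tb, ponly_Trest.
    - apply opbr_pp; auto using ponly_Tb, ponly_Trest.
    - apply rel_Trest_Vb; auto.
    - apply rel_Vb_Trest; auto. }
  pose proof (idE3 N rho Hsm Hrel x p HU) as H. cbn [interp] in H. unfold rho in H. unfold tauv. rewrite <- H.
  unfold opbr.
  apply (poisson_ext N _ _ _ _ (poisson_ext N _ _ _ _ (eqU_refl N _) (eqU_T b)) (eqU_T b) x p HU).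
Qed.

Lemma V6 a b x p : validP N a -> validP N b -> noCollision N x -> wv N G m x p a b = wv N G m x p b a.
Proof.
  intros Ha Hb HU.
  set (rho := fun n => match n with 0%nat => Vb G m a | 1%nat => Vb G m b | 2%nat => Tkin N m | _ => zeroF end).
  assert (Hsm : forall n, Smooth N (rho n)).
  { intros n; destruct n as [|[|[|n]]]; simpl; auto using sm_Tkin, sm_Vb, sm_zero. }
  assert (Hrel : forall i j, relE4 i j = true -> eqU N (opbr N (rho i) (rho j)) zeroF).
  { intros i j Hij y q _. destruct i as [|[|[|i]]]; destruct j as [|[|[|j]]]; relcases Hij; simpl;
    apply opbr_xx; auto using xonly_Vb. }
  exact (idE4 N rho Hsm Hrel x p HU).
Qed.

Lemma V7 a b x p : validP N a -> validP N b -> noCollision N x ->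
  fst b <> fst a -> fst b <> snd a -> snd b <> fst a -> snd b <> snd a -> wv N G m x p a b = 0.
Proof.
  intros Ha Hb HU H1 H2 H3 H4.
  set (rho := fun n => match n with 0%nat => Vb G m a | 1%nat => Vb G m b | 2%nat => Ti m (fst b)
     | 3%nat => Ti m (snd b) | 4%nat => Trest N m b | _ => zeroF end).
  assert (Hsm : forall n, Smooth N (rho n)).
  { intros n; destruct n as [|[|[|[|[|n]]]]]; simpl; auto using sm_Ti, sm_Trest, sm_Vb, sm_zero. }
  assert (Hrel : forall i j, relE5 i j = true -> eqU N (opbr N (rho i) (rho j)) zeroF).
  { intros i j Hij y q _. destruct i as [|[|[|[|[|i]]]]]; destruct j as [|[|[|[|[|j]]]]]; relcases Hij; simpl.
    - apply opbr_xx; auto using xonly_Vb.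
    - unfold opbr. rewrite poisson_anti. fold (opbr N (Ti m (fst b)) (Vb G m a)). rewrite rel_Ti_Vb; auto. unfold zeroF; ring.
    - unfold opbr. rewrite poisson_anti. fold (opbr N (Ti m (snd b)) (Vb G m a)). rewrite rel_Ti_Vb; auto. unfold zeroF; ring.
    - apply opbr_xx; auto using xonly_Vb.
    - apply rel_Vb_Trest; auto.
    - apply rel_Ti_Vb; auto.
    - apply rel_Ti_Vb; auto.
    - apply rel_Trest_Vb; auto. }
  pose proof (idE5 N rho Hsm Hrel x p HU) as H. cbn [interp] in H. unfold rho in H. unfold wv.
  unfold zeroF in H. rewrite <- H. unfold opbr.
  apply (poisson_ext N _ _ _ _ (poisson_ext N _ _ _ _ (eqU_T b) (eqU_refl N _)) (eqU_refl N _) x p HU).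
Qed.

Lemma V4 b l x p : validP N b -> List.Forall (validP N) l -> noCollision N x ->
  DeltaBDf N G m b (VsumF G m l) x p = 1/24 * lsum l (fun a => wv N G m x p a b).
Proof.
  intros Hb Hl HU. unfold DeltaBDf, DeltaBD. cbn [interp rhoBD]. unfold scaleF.
  assert (Hsl : forall a, In a l -> Smooth N (Vb G m a)) by (intros a Ha; apply sm_Vb; eapply Forall_forall; eauto).
  change (VsumF G m l) with (FL l (Vb G m)).
  rewrite (opbr_ext N _ _ _ _ (eqU_refl N _) (opbr_FL_r N (Tb m b) l (Vb G m) (sm_Tb N m b) Hsl) x p HU).
  rewrite opbr_FL_r; auto using sm_Vb.
  2:{ intros a Ha. unfold opbr. apply sm_poisson; auto using sm_Tb. }
  unfold FL. rewrite <- (lsum_scal l (-1/24)), <- (lsum_scal l (1/24)). apply lsum_ext. intros a Ha.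
  assert (Ha' : validP N a) by (eapply Forall_forall; eauto).
  set (rho := fun n => match n with 0%nat => Vb G m b | 1%nat => Tb m b | 2%nat => Vb G m a
     | 3%nat => Trest N m b | _ => zeroF end).
  assert (Hsm : forall n, Smooth N (rho n)).
  { intros n; destruct n as [|[|[|[|n]]]]; simpl; auto using sm_Tb, sm_Trest, sm_Vb, sm_zero. }
  assert (Hrel : forall i j, relE6 i j = true -> eqU N (opbr N (rho i) (rho j)) zeroF).
  { intros i j Hij y q _. destruct i as [|[|[|[|i]]]]; destruct j as [|[|[|[|j]]]]; relcases Hij; simpl.
    - apply opbr_xx; auto using xonly_Vb.
    - apply rel_Vb_Trest; auto.
    - apply opbr_xx; auto using xonly_Vb.
    - apply rel_Trest_Vb; auto. }
  pose proof (idE6 N rho Hsm Hrel x p HU) as H. cbn [interp] in H. unfold rho in H.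
  rewrite H. unfold scaleF. unfold wv.
  rewrite (opbr_ext N _ _ _ _ (eqU_refl N _) (opbr_ext N _ _ _ _ (eqU_refl N _) (eqU_sym N _ _ (eqU_T b))) x p HU).
  match goal with |- context [opbr N ?u ?v x p] => set (zz := opbr N u v x p) end. lra.
Qed.
End Vals2.

Definition FinLT : LT := LA (LS (1/12) (LB (LV 1) (LB (LV 1) (LV 0)))) (LS (-1/24) (LB (LV 0) (LB (LV 0) (LV 1)))).

Section Fin.
Variables (N : nat) (G : R) (m : nat -> R).

Definition rhoFin (ord : list (nat * nat)) : nat -> Fun := fun n =>
  match n with 0%nat => Tkin N m | 1%nat => VsumF G m ord | 2%nat => M3DB N G m ord | _ => zeroF end.

Lemma DB_total ord : List.Forall (validP N) ord ->
  SE N (logProd N (DB2 N G m ord))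
     (ser3 (addF (Tkin N m) (VsumF G m ord)) (addF (M3DB N G m ord) (interp N (rhoFin ord) FinLT))).
Proof.
  intros Hv. destruct (DB_ind N G m ord Hv) as [H1 H2].
  set (rho := rhoFin ord).
  assert (Hsm : forall n, Smooth N (rho n)).
  { intros n; destruct n as [|[|[|n]]]; simpl; auto using sm_Tkin, sm_VsumF, sm_zero. }
  assert (Hrel : forall i j, relF i j = true -> eqU N (opbr N (rho i) (rho j)) zeroF) by (intros; discriminate).
  set (g := gen (1/2) (Tkin N m)).
  assert (Hg : List.Forall (GenOK N) [g]).
  { constructor; [|constructor]. exists (1/2), (Tkin N m). split; auto. apply sm_Tkin. }
  assert (E : DB2 N G m ord = ([g] ++ mDB G m ord) ++ [g]).
  { unfold DB2, mDB, psiWdag, g. rewrite !app_assoc. reflexivity. }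
  change (logProd N (DB2 N G m ord)) with (Lg N (DB2 N G m ord)). rewrite E.
  assert (HgS : SE N (Lg N [g]) (iS N rho gTh)).
  { unfold Lg. simpl. eapply SE_trans; [apply bch_zero_l; apply SmS_gen, sm_Tkin|].
    intros k Hk x p HU. destruct k as [|[|[|[|[|k]]]]]; try lia; reflexivity. }
  eapply SE_trans; [apply Lg_app|].
  { apply List.Forall_app; split; auto. apply GenOK_mDB; auto. } { exact Hg. }
  eapply SE_trans; [apply bch_cong; [apply Lg_app| apply SE_refl]|]; auto.
  { apply GenOK_mDB; auto. }
  eapply SE_trans.
  { apply (bch_L' N rho _ _ (bchL gTh Mf) gTh); [apply (bch_L' N rho _ _ gTh Mf)|]; auto.
    eapply SE_trans; [exact H1|]. intros k Hk x p HU. destruct k as [|[|[|[|[|k]]]]]; try lia; reflexivity. }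
  eapply SE_trans; [apply finDB_L; auto|].
  intros k Hk x p HU. destruct k as [|[|[|[|[|k]]]]]; try lia; reflexivity.
Qed.

Lemma BD_total ord : List.Forall (validP N) ord ->
  SE N (logProd N (BD2 N G m ord)) (ser3 (addF (Tkin N m) (VsumF G m ord)) (N3BD N G m ord)).
Proof.
  intros Hv. destruct (BD_ind N G m ord Hv) as [H1 H2]. exact H1.
Qed.

Definition S2v x p (l : list (nat * nat)) := lsum l (fun a => lsum l (fun b => wv N G m x p a b)).
Definition Dgv x p (l : list (nat * nat)) := lsum l (fun b => wv N G m x p b b).
Definition Tauv x p (l : list (nat * nat)) := lsum l (fun b => tauv N G m x p b).

Lemma S2_snoc x p l b : noCollision N x -> validP N b -> List.Forall (validP N) l ->
  S2v x p (l ++ [b]) = S2v x p l + 2 * lsum l (fun a => wv N G m x p a b) + wv N G m x p b b.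
Proof.
  intros HU Hb Hl. unfold S2v. rewrite lsum_app. simpl.
  rewrite (lsum_ext l (fun a => lsum (l ++ [b]) (fun c => wv N G m x p a c))
            (fun a => lsum l (fun c => wv N G m x p a c) + wv N G m x p a b)).
  2:{ intros a Ha. rewrite lsum_app. simpl. ring. }
  rewrite lsum_plus, lsum_app. simpl.
  rewrite (lsum_ext l (fun c => wv N G m x p b c) (fun c => wv N G m x p c b)).
  2:{ intros c Hc. apply V6; auto. eapply Forall_forall; eauto. }
  ring.
Qed.
Lemma S2_cons x p l b : noCollision N x -> validP N b -> List.Forall (validP N) l ->
  S2v x p (b :: l) = S2v x p l + 2 * lsum l (fun a => wv N G m x p a b) + wv N G m x p b b.
Proof.
  intros HU Hb Hl. unfold S2v. simpl.
  rewrite (lsum_ext l (fun a => wv N G m x p a b + lsum l (fun c => wv N G m x p a c))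
            (fun a => lsum l (fun c => wv N G m x p a c) + wv N G m x p a b)).
  2:{ intros; ring. }
  rewrite lsum_plus.
  rewrite (lsum_ext l (fun c => wv N G m x p b c) (fun c => wv N G m x p c b)).
  2:{ intros c Hc. apply V6; auto. eapply Forall_forall; eauto. }
  ring.
Qed.

Lemma M3DB_val l x p : noCollision N x -> List.Forall (validP N) l ->
  M3DB N G m l x p = -1/16 * (S2v x p l - Dgv x p l) - 1/12 * Dgv x p l + 1/24 * Tauv x p l.
Proof.
  intros HU. induction l as [|b l IH] using rev_ind; intros Hl.
  - unfold M3DB, S2v, Dgv, Tauv. simpl. unfold zeroF. lra.
  - apply List.Forall_app in Hl. destruct Hl as [Hl Hb]. inversion Hb as [|? ? Hb' _]; subst.
    unfold M3DB. rewrite rev_app_distr. simpl. rewrite rev_involutive. unfold addF.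
    fold (M3DB N G m l). rewrite IH; auto. rewrite V3; auto.
    rewrite S2_snoc; auto. unfold Dgv, Tauv. rewrite !lsum_app. simpl. lra.
Qed.

Lemma N3BD_val l x p : noCollision N x -> List.Forall (validP N) l ->
  N3BD N G m l x p = 1/48 * (S2v x p l - Dgv x p l).
Proof.
  intros HU. induction l as [|b l IH]; intros Hl.
  - unfold S2v, Dgv. simpl. unfold zeroF. lra.
  - inversion Hl as [|? ? Hb Hl']; subst. simpl. unfold addF. rewrite IH, V4; auto.
    rewrite S2_cons; auto. unfold Dgv. simpl. lra.
Qed.

Lemma Fin_val ord x p : noCollision N x -> List.Forall (validP N) ord ->
  interp N (rhoFin ord) FinLT x p = 1/12 * S2v x p ord - 1/24 * Tauv x p ord.
Proof.
  intros HU Hv. unfold FinLT. cbn [interp rhoFin]. unfold addF, scaleF.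
  assert (Hsl : forall a, In a ord -> Smooth N (Vb G m a)) by (intros a Ha; apply sm_Vb; eapply Forall_forall; eauto).
  change (VsumF G m ord) with (FL ord (Vb G m)).
  assert (E1 : opbr N (FL ord (Vb G m)) (opbr N (FL ord (Vb G m)) (Tkin N m)) x p = S2v x p ord).
  { rewrite opbr_FL_l; auto.
    2:{ unfold opbr; apply sm_poisson; [apply sm_Tkin| apply sm_FL; auto]. }
    unfold FL, S2v. apply lsum_ext. intros a Ha.
    rewrite (opbr_ext N _ _ _ _ (eqU_refl N _) (opbr_FL_l N (Tkin N m) ord (Vb G m) (sm_Tkin N m) Hsl) x p HU).
    rewrite opbr_FL_r; auto.
    intros; unfold opbr; apply sm_poisson; auto using sm_Tkin. }
  assert (E2 : opbr N (Tkin N m) (opbr N (Tkin N m) (FL ord (Vb G m))) x p = Tauv x p ord).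
  { rewrite (opbr_ext N _ _ _ _ (eqU_refl N _) (opbr_FL_r N (Tkin N m) ord (Vb G m) (sm_Tkin N m) Hsl) x p HU).
    rewrite opbr_FL_r; auto using sm_Tkin.
    2:{ intros; unfold opbr; apply sm_poisson; auto using sm_Tkin. }
    unfold FL, Tauv. apply lsum_ext. intros a Ha. apply V5; auto. eapply Forall_forall; eauto. }
  rewrite E1, E2. lra.
Qed.
End Fin.

Lemma sumR_trunc n j h : (j <= n)%nat -> sumR n (fun i => if Nat.ltb i j then h i else 0) = sumR j h.
Proof.
  induction n; intros Hj.
  - assert (j = 0%nat) by lia. subst. reflexivity.
  - destruct (Nat.eq_dec j (S n)) as [->|Hn].
    + rewrite !sumR_S. rewrite (proj2 (Nat.ltb_lt n (S n))) by lia. f_equal.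
      apply sumR_ext; intros i Hi. rewrite (proj2 (Nat.ltb_lt i (S n))) by lia. reflexivity.
    + rewrite sumR_S, IHn by lia. rewrite (proj2 (Nat.ltb_ge n j)) by lia. ring.
Qed.

Lemma L2 n g : sumR n (fun i => sumR n (fun j => if Nat.ltb i j then g i j else 0)) =
               sumR n (fun j => sumR j (fun i => g i j)).
Proof.
  rewrite sumR_swap. apply sumR_ext; intros j Hj. apply sumR_trunc. lia.
Qed.

Lemma L3 n F : sumR n (fun i => sumR n (fun j => sumR n (fun k =>
    if andb (Nat.ltb i j) (Nat.ltb j k) then F i j k else 0))) =
  sumR n (fun k => sumR k (fun j => sumR j (fun i => F i j k))).
Proof.
  transitivity (sumR n (fun i => sumR n (fun j => if Nat.ltb i j then sumR n (fun k => if Nat.ltb j k then F i j k else 0) else 0))).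
  { apply sumR_ext; intros i _; apply sumR_ext; intros j _. destruct (Nat.ltb i j); simpl; auto.
    apply sumR_zero; auto. }
  rewrite L2.
  transitivity (sumR n (fun j => sumR n (fun k => if Nat.ltb j k then sumR j (fun i => F i j k) else 0))).
  { apply sumR_ext; intros j _. rewrite sumR_swap. apply sumR_ext; intros k _.
    destruct (Nat.ltb j k); auto. apply sumR_zero; auto. }
  apply L2.
Qed.

Definition SP n (f : nat * nat -> R) := sumR n (fun j => sumR j (fun i => f (i, j))).

Lemma lsum_map_seq {A} (g : nat -> A) s f : lsum (map g s) f = fold_right Rplus 0 (map (fun i => f (g i)) s).
Proof. induction s; simpl; auto. rewrite IHs. reflexivity. Qed.

Lemma AP_S n : allPairs (S n) = allPairs n ++ map (fun i => (i, n)) (seq 0 n).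
Proof. unfold allPairs. rewrite seq_S, flat_map_app. simpl. rewrite app_nil_r. reflexivity. Qed.

Lemma lsum_AP n f : lsum (allPairs n) f = SP n f.
Proof.
  induction n; [reflexivity|]. rewrite AP_S, lsum_app, IHn. unfold SP. rewrite sumR_S. f_equal.
  rewrite lsum_map_seq. reflexivity.
Qed.

Lemma SP_S n f : SP (S n) f = SP n f + sumR n (fun i => f (i, n)).
Proof. unfold SP. rewrite sumR_S. reflexivity. Qed.

Lemma in_AP n a : In a (allPairs n) -> (fst a < snd a)%nat /\ (snd a < n)%nat.
Proof.
  unfold allPairs. intros H. apply in_flat_map in H. destruct H as [j [Hj Ha]].
  apply in_map_iff in Ha. destruct Ha as [i [<- Hi]]. apply in_seq in Hj, Hi. simpl. lia.
Qed.

Lemma sumR_single n i c : (i < n)%nat -> sumR n (fun k => if Nat.eqb k i then c else 0) = c.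
Proof.
  induction n; intros H; [lia|]. rewrite sumR_S. destruct (Nat.eq_dec i n) as [->|Hn].
  - rewrite Nat.eqb_refl. rewrite sumR_zero; [ring|]. intros k Hk. destruct (Nat.eqb_spec k n); [lia|auto].
  - rewrite IHn by lia. destruct (Nat.eqb_spec n i); [lia|ring].
Qed.

Lemma sumR_two n i j f : (i < n)%nat -> (j < n)%nat -> i <> j ->
  (forall k, (k < n)%nat -> k <> i -> k <> j -> f k = 0) -> sumR n f = f i + f j.
Proof.
  intros Hi Hj Hij H.
  rewrite (sumR_ext n f (fun k => (if Nat.eqb k i then f i else 0) + (if Nat.eqb k j then f j else 0))).
  - rewrite sumR_plus, !sumR_single; auto.
  - intros k Hk. destruct (Nat.eqb_spec k i), (Nat.eqb_spec k j); subst; try lia; try ring.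
    rewrite H by auto. ring.
Qed.

Lemma sum_sq n F : sumR n (fun i => sumR n (fun k => F i k)) =
  sumR n (fun k => F k k + sumR k (fun i => F i k + F k i)).
Proof.
  induction n; [reflexivity|].
  rewrite (sumR_ext (S n) (fun i => sumR (S n) (fun k => F i k)) (fun i => sumR n (fun k => F i k) + F i n))
    by (intros; apply sumR_S).
  rewrite sumR_plus. rewrite !sumR_S. rewrite <- IHn. rewrite sumR_plus. change (sumR n (F n)) with (sumR n (fun k => F n k)). ring.
Qed.

Lemma SP_ext_helper n f g : (forall a, f a = g a) -> SP n f = SP n g.
Proof. intros H. unfold SP. apply sumR_ext; intros; apply sumR_ext; intros; apply H. Qed.

Section Comb.
Variable Nmax : nat.
Variable W : nat * nat -> nat * nat -> R.
Hypothesis Hsym : forall i j k l, (i < j < Nmax)%nat -> (k < l < Nmax)%nat -> W (i, j) (k, l) = W (k, l) (i, j).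
Hypothesis Hdisj : forall i j k l, (i < j < Nmax)%nat -> (k < l < Nmax)%nat ->
  i <> k -> i <> l -> j <> k -> j <> l -> W (i, j) (k, l) = 0.

Definition R3 n := sumR n (fun k => sumR k (fun j => sumR j (fun i =>
   W (i, k) (i, j) + W (i, j) (j, k) + W (j, k) (i, k)))).

Lemma SP_plus n f g : SP n (fun a => f a + g a) = SP n f + SP n g.
Proof. unfold SP. rewrite <- sumR_plus. apply sumR_ext; intros. apply sumR_plus. Qed.

Lemma comb n : (n <= Nmax)%nat ->
  SP n (fun a => SP n (fun b => W a b)) - SP n (fun a => W a a) = 2 * R3 n.
Proof.
  induction n; intros Hn; [unfold SP, R3, sumR; simpl; lra|].
  specialize (IHn ltac:(lia)).
  set (X := SP n (fun a => sumR n (fun k => W a (k, n)))).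
  set (Y := sumR n (fun j => sumR j (fun i => W (i, j) (i, n) + W (i, j) (j, n)))).
  set (Z := sumR n (fun j => sumR j (fun i => W (i, n) (j, n)))).
  set (Dn := sumR n (fun k => W (k, n) (k, n))).
  assert (E1 : SP (S n) (fun a => SP (S n) (fun b => W a b)) =
     SP n (fun a => SP n (fun b => W a b)) + X + sumR n (fun i => SP n (fun b => W (i, n) b))
     + sumR n (fun i => sumR n (fun k => W (i, n) (k, n)))).
  { rewrite SP_S. rewrite (SP_ext_helper n (fun a => SP (S n) (fun b => W a b))
       (fun a => SP n (fun b => W a b) + sumR n (fun k => W a (k, n)))) by (intros; apply SP_S).
    rewrite SP_plus. rewrite (sumR_ext n (fun i => SP (S n) (fun b => W (i, n) b))
       (fun i => SP n (fun b => W (i, n) b) + sumR n (fun k => W (i, n) (k, n)))) by (intros; apply SP_S).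
    rewrite sumR_plus. unfold X. ring. }
  assert (E2 : sumR n (fun i => SP n (fun b => W (i, n) b)) = X).
  { unfold X, SP. rewrite sumR_swap. apply sumR_ext; intros j Hj.
    rewrite sumR_swap. apply sumR_ext; intros i Hi. apply sumR_ext; intros k Hk. apply Hsym; lia. }
  assert (E3 : X = Y).
  { unfold X, Y, SP. apply sumR_ext; intros j Hj. apply sumR_ext; intros i Hi.
    apply (sumR_two n i j (fun k => W (i, j) (k, n))); try lia.
    intros k Hk H1 H2. apply Hdisj; lia. }
  assert (E4 : sumR n (fun i => sumR n (fun k => W (i, n) (k, n))) = Dn + 2 * Z).
  { rewrite sum_sq. unfold Dn, Z. rewrite <- sumR_scal, <- sumR_plus. apply sumR_ext; intros k Hk.
    f_equal. rewrite <- sumR_scal. apply sumR_ext; intros i Hi. rewrite (Hsym k n i n) by lia. ring. }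
  assert (E5 : SP (S n) (fun a => W a a) = SP n (fun a => W a a) + Dn) by (rewrite SP_S; reflexivity).
  assert (E6 : R3 (S n) = R3 n + (Y + Z)).
  { unfold R3 at 1. rewrite sumR_S. fold (R3 n). f_equal. unfold Y, Z. rewrite <- sumR_plus.
    apply sumR_ext; intros j Hj. rewrite <- sumR_plus. apply sumR_ext; intros i Hi.
    rewrite (Hsym i n i j) by lia. rewrite (Hsym j n i n) by lia. ring. }
  rewrite E1, E5, E6, E2, E4. rewrite E3. lra.
Qed.
End Comb.

Section Final.
Variables (N : nat) (G : R) (m : nat -> R).

Lemma valid_AP b : In b (allPairs N) -> validP N b.
Proof. intros H. apply in_AP in H. unfold validP. lia. Qed.

Lemma Forall_valid ord : Permutation ord (allPairs N) -> List.Forall (validP N) ord.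
Proof.
  intros Hp. apply Forall_forall. intros b Hb. apply valid_AP.
  eapply Permutation_in; eauto.
Qed.

Lemma Vpot_eq ord x p : Permutation ord (allPairs N) -> Vpot N G m x p = VsumF G m ord x p.
Proof.
  intros Hp. unfold Vpot, VsumF. rewrite (lsum_perm _ _ _ Hp), lsum_AP.
  rewrite (L2 N (fun i j => Vij G m i j x p)). reflexivity.
Qed.

Lemma Vij_sym i j : Vij G m j i = Vij G m i j.
Proof.
  apply functional_extensionality; intro x; apply functional_extensionality; intro p.
  unfold Vij. rewrite (sumR_ext 3 (fun a => (x j a - x i a) ^ 2) (fun a => (x i a - x j a) ^ 2)) by (intros; ring).
  unfold Rdiv. ring.
Qed.

Lemma S2_perm x p ord : Permutation ord (allPairs N) ->
  S2v N G m x p ord = SP N (fun a => SP N (fun b => wv N G m x p a b)).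
Proof.
  intros Hp. unfold S2v. rewrite (lsum_perm _ _ _ Hp), lsum_AP.
  apply SP_ext_helper. intros a. rewrite (lsum_perm _ _ _ Hp), lsum_AP. reflexivity.
Qed.
Lemma Dg_perm x p ord : Permutation ord (allPairs N) ->
  Dgv N G m x p ord = SP N (fun a => wv N G m x p a a).
Proof. intros Hp. unfold Dgv. rewrite (lsum_perm _ _ _ Hp), lsum_AP. reflexivity. Qed.

Lemma TVV3_val x p : noCollision N x ->
  TVV3 N G m x p = SP N (fun a => SP N (fun b => wv N G m x p a b)) - SP N (fun a => wv N G m x p a a).
Proof.
  intros HU.
  rewrite (comb N (wv N G m x p)); auto.
  - unfold TVV3. cbv zeta. f_equal. rewrite L3. unfold R3.
    apply sumR_ext; intros k Hk; apply sumR_ext; intros j Hj; apply sumR_ext; intros i Hi.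
    unfold wv, opbr. rewrite (Vij_sym i j), (Vij_sym i k), (Vij_sym j k). unfold Vb; simpl. reflexivity.
  - intros i j k l H1 H2. apply V6; auto; unfold validP; simpl; lia.
  - intros i j k l H1 H2 H3 H4 H5 H6. apply V7; auto; unfold validP; simpl; lia.
Qed.

Lemma diff_val x p ord : noCollision N x -> Permutation ord (allPairs N) ->
  S2v N G m x p ord - Dgv N G m x p ord = TVV3 N G m x p.
Proof. intros HU Hp. rewrite S2_perm, Dg_perm, TVV3_val; auto. Qed.
End Final.

Theorem mainTheorem1 :
  forall (N : nat) (G : R) (m : nat -> R) (ord : list (nat * nat)),
    0 < G ->
    (forall i, (i < N)%nat -> 0 < m i) ->
    Permutation ord (allPairs N) ->
    forall (k : nat) (x p : Coord),
      (1 <= k <= 4)%nat ->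
      noCollision N x ->
      logProd N (DB2 N G m ord) k x p = target N G m k x p /\
      logProd N (BD2 N G m ord) k x p = target N G m k x p.
Proof.
  intros N G m ord HG Hm Hp k x p Hk HU.
  pose proof (Forall_valid N ord Hp) as Hv.
  pose proof (DB_total N G m ord Hv k Hk x p HU) as HDB.
  pose proof (BD_total N G m ord Hv k Hk x p HU) as HBD.
  rewrite HDB, HBD.
  destruct k as [|[|[|[|[|k]]]]]; try lia; cbn [ser3]; unfold target; cbn [Nat.eqb].
  - unfold addF. rewrite (Vpot_eq N G m ord x p Hp). split; reflexivity.
  - split; reflexivity.
  - unfold scaleF. unfold addF at 1. rewrite M3DB_val, Fin_val, N3BD_val; auto.
    rewrite <- (diff_val N G m x p ord HU Hp). unfold Tauv. split; lra.
  - split; reflexivity.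
Qed.
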